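(* There exist absolute constants $c>0$ and $C>0$ such that the following holds. Let $n\ge2$ be an integer and $L,\mu,\Delta,\varepsilon>0$ satisfy $\kappa:=L/\mu\ge\sqrt{3/n}\,(n/2+1)$ and $\varepsilon/\Delta\le0.00327$. Then for every PIFO algorithm $\mathcal{A}$ there exist a dimension $d\le C\,n^{-1/4}\sqrt{\kappa}\log(\Delta/\varepsilon)$ and functions $f_1,\dots,f_n:\mathbb{R}^d\to\mathbb{R}$ such that $\{f_i\}_{i=1}^n$ is $L$-average smooth, $f=\frac1n\sum_i f_i$ is $\mu$-strongly convex, $f(x_0)-f(x^* )=\Delta$ (with $x^*$ the minimizer of $f$ and $x_0$ the initial point of $\mathcal{A}$), and the iterates of $\mathcal{A}$ satisfy $\mathbb{E} f(x_t)-f(x^* )\ge\varepsilon$ for all integers $0\le t\le c\,(n+n^{3/4}\sqrt{\kappa})\log(\Delta/\varepsilon)$. That is, $\mathcal{A}$ needs $\Omega\big((n+n^{3/4}\sqrt\kappa)\log(\Delta/\varepsilon)\big)$ oracle queries.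
   Context: Differentiable $f_1,\dots,f_n:\mathbb{R}^d\to\mathbb{R}$ are $L$-average smooth if $\frac1n\sum_{i=1}^n\|\nabla f_i(x)-\nabla f_i(y)\|_2^2\le L^2\|x-y\|_2^2$ for all $x,y$. A differentiable $g$ is $\mu$-strongly convex if $g(y)\ge g(x)+\langle\nabla g(x),y-x\rangle+\frac{\mu}{2}\|y-x\|_2^2$ for all $x,y$. For $\gamma>0$, $\mathrm{prox}^{\gamma}_g(x)=\arg\min_u\{g(u)+\frac{1}{2\gamma}\|x-u\|_2^2\}$. PIFO algorithm: given $f_1,\dots,f_n:\mathbb{R}^d\to\mathbb{R}$ and $f=\frac1n\sum_i f_i$, a PIFO algorithm $\mathcal{A}$ is specified by a probability vector $(p_1,\dots,p_n)$ ($p_j\ge0$, $\sum_j p_j=1$), an initial point $x_0$ and parameters $\gamma_t>0$; it draws indices $i_1,i_2,\dots$ independently with $\mathbb{P}(i_t=j)=p_j$, at step $t\ge1$ queries the oracle $h_f(x_{t-1},i_t,\gamma_t)=[f_{i_t}(x_{t-1}),\nabla f_{i_t}(x_{t-1}),\mathrm{prox}^{\gamma_t}_{f_{i_t}}(x_{t-1})]$, and outputs an iterate $x_t\in\mathrm{span}\{x_0,\dots,x_{t-1},\nabla f_{i_1}(x_0),\dots,\nabla f_{i_t}(x_{t-1}),\mathrm{prox}^{\gamma_1}_{f_{i_1}}(x_0),\dots,\mathrm{prox}^{\gamma_t}_{f_{i_t}}(x_{t-1})\}$ (the choice within the span may depend on all previously observed information). Iterate $x_t$ uses $t$ oracle queries.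 *)

(* Defs.v *)
From Stdlib Require Fin.
From Stdlib Require Import Reals Lra List.
Import ListNotations.
Open Scope R_scope.

Definition vec (d : nat) := Fin.t d -> R.

Fixpoint finsum (d : nat) : (Fin.t d -> R) -> R :=
  match d with
  | O => fun _ => 0
  | S d' => fun g => g Fin.F1 + finsum d' (fun k => g (Fin.FS k))
  end.

Definition vzero {d} : vec d := fun _ => 0.
Definition vadd {d} (x y : vec d) : vec d := fun k => x k + y k.
Definition vsub {d} (x y : vec d) : vec d := fun k => x k - y k.
Definition vscale {d} (a : R) (x : vec d) : vec d := fun k => a * x k.
Definition inner {d} (x y : vec d) : R := finsum d (fun k => x k * y k).
Definition sqnorm {d} (x : vec d) : R := inner x x.
Definition vnorm {d} (x : vec d) : R := sqrt (sqnorm x).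

Definition has_gradient {d} (f : vec d -> R) (g : vec d -> vec d) : Prop :=
  forall x eps, 0 < eps -> exists delta, 0 < delta /\
    forall h, vnorm h < delta ->
      Rabs (f (vadd x h) - f x - inner (g x) h) <= eps * vnorm h.

Definition sum_lt (n : nat) (F : nat -> R) : R :=
  fold_right Rplus 0 (map F (seq 0 n)).

Definition avg_fun (n : nat) {d} (fs : nat -> vec d -> R) : vec d -> R :=
  fun x => / INR n * sum_lt n (fun i => fs i x).

Definition average_smooth (n : nat) {d} (gs : nat -> vec d -> vec d) (L : R) : Prop :=
  forall x y,
    / INR n * sum_lt n (fun i => sqnorm (vsub (gs i x) (gs i y)))
      <= L ^ 2 * sqnorm (vsub x y).

Definition strongly_convex {d} (f : vec d -> R) (mu : R) : Prop :=
  exists g, has_gradient f g /\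
    forall x y, f y >= f x + inner (g x) (vsub y x) + mu / 2 * sqnorm (vsub y x).

Definition is_minimizer {d} (f : vec d -> R) (xs : vec d) : Prop :=
  forall x, f xs <= f x.

Definition is_prox {d} (f : vec d -> R) (gam : R) (x u : vec d) : Prop :=
  forall v, f u + / (2 * gam) * sqnorm (vsub x u) <= f v + / (2 * gam) * sqnorm (vsub x v).

Definition is_prox_unique {d} (f : vec d -> R) (gam : R) (x u : vec d) : Prop :=
  is_prox f gam x u /\ forall v, is_prox f gam x v -> v = u.

(** One oracle answer: index i_t and h_f(x_{t-1}, i_t, gam_t). *)
Record oracle_ans (d : nat) := mkAns {
  ans_idx : nat;
  ans_val : R;
  ans_grad : vec d;
  ans_prox : vec d }.
Arguments ans_idx {d}. Arguments ans_val {d}.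
Arguments ans_grad {d}. Arguments ans_prox {d}.

(** For each dimension d
    it has an initial point, step parameters gam_t (t >= 1) and a rule choosing,
    from the full observed history [a_1; ...; a_t] (indices and oracle answers),
    coefficients (a, b, c) so that
      x_t = sum_{s<t} a s x_s + sum_{s<t} b s grad_{s+1} + sum_{s<t} c s prox_{s+1}. *)
Record PIFO (n : nat) := mkPIFO {
  prob : nat -> R;
  prob_nonneg : forall j, (j < n)%nat -> 0 <= prob j;
  prob_sum : sum_lt n prob = 1;
  init : forall d, vec d;
  gam : forall d : nat, nat -> R;
  gam_pos : forall (d t : nat), 0 < gam d t;
  rule : forall d, list (oracle_ans d) -> (nat -> R) * (nat -> R) * (nat -> R) }.
Arguments prob {n}. Arguments init {n}. Arguments gam {n}. Arguments rule {n}.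

Fixpoint lincomb {d} (a : nat -> R) (vs : list (vec d)) (k : nat) : vec d :=
  match vs with
  | [] => vzero
  | v :: vs' => vadd (vscale (a k) v) (lincomb a vs' (S k))
  end.

(** One step: state (iterates [x_0..x_t], history of t answers), draw index i. *)
Definition step {n} (A : PIFO n) (d : nat) (fs : nat -> vec d -> R)
  (gs : nat -> vec d -> vec d) (px : nat -> R -> vec d -> vec d)
  (st : list (vec d) * list (oracle_ans d)) (i : nat)
  : list (vec d) * list (oracle_ans d) :=
  let '(xs, h) := st in
  let x := last xs (init A d) in
  let g := gam A d (S (length h)) in
  let ans := mkAns d i (fs i x) (gs i x) (px i g x) in
  let h' := h ++ [ans] in
  let '(a, b, c) := rule A d h' in
  let xn := vadd (lincomb a xs 0)
              (vadd (lincomb b (map ans_grad h') 0) (lincomb c (map ans_prox h') 0)) in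
  (xs ++ [xn], h').

(** The iterate x_t produced when the drawn indices are l = [i_1; ...; i_t]. *)
Definition iterate {n} (A : PIFO n) (d : nat) (fs : nat -> vec d -> R)
  (gs : nat -> vec d -> vec d) (px : nat -> R -> vec d -> vec d) (l : list nat) : vec d :=
  last (fst (fold_left (step A d fs gs px) l ([init A d], []))) (init A d).

Fixpoint idx_seqs (n t : nat) : list (list nat) :=
  match t with
  | O => [[]]
  | S t' => flat_map (fun l => map (fun j => l ++ [j]) (seq 0 n)) (idx_seqs n t')
  end.

Definition weight (p : nat -> R) (l : list nat) : R :=
  fold_right (fun j r => p j * r) 1 l.

(** Expectation over i.i.d. i_1..i_t ~ p. *)
Definition expect (n : nat) (p : nat -> R) (t : nat) (F : list nat -> R) : R :=
  fold_right Rplus 0 (map (fun l => weight p l * F l) (idx_seqs n t)).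

(* Main.v *)
Require Import Defs.
From Stdlib Require Import Reals Lra Lia Psatz List Arith FunctionalExtensionality Classical ZArith.
From Stdlib Require Fin.
Import ListNotations.
Open Scope R_scope.

Fixpoint ss (d : nat) (F : nat -> R) : R :=
  match d with O => 0 | S d' => ss d' F + F d' end.

Lemma ss_ext d F G : (forall m, (m < d)%nat -> F m = G m) -> ss d F = ss d G.
Proof. induction d; simpl; intros H; auto. rewrite IHd by (intros; apply H; lia). rewrite H by lia. auto. Qed.

Lemma ss_plus d F G : ss d (fun m => F m + G m) = ss d F + ss d G.
Proof. induction d; simpl; [lra|rewrite IHd; lra]. Qed.
Lemma ss_minus d F G : ss d (fun m => F m - G m) = ss d F - ss d G.
Proof. induction d; simpl; [lra|rewrite IHd; lra]. Qed.
Lemma ss_scal d c F : ss d (fun m => c * F m) = c * ss d F.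
Proof. induction d; simpl; [lra|rewrite IHd; lra]. Qed.
Lemma ss_zero d : ss d (fun _ => 0) = 0.
Proof. induction d; simpl; [lra|rewrite IHd; lra]. Qed.
Lemma ss_le d F G : (forall m, (m < d)%nat -> F m <= G m) -> ss d F <= ss d G.
Proof. induction d; simpl; intros H; [lra|]. pose proof (H d ltac:(lia)). pose proof (IHd ltac:(intros; apply H; lia)). lra. Qed.
Lemma ss_nonneg d F : (forall m, (m < d)%nat -> 0 <= F m) -> 0 <= ss d F.
Proof. intros H. rewrite <- (ss_zero d). apply ss_le; auto. Qed.
Lemma ss_shift d F : ss (S d) F = F O + ss d (fun m => F (S m)).
Proof. induction d; simpl in *; [lra|]. rewrite IHd. lra. Qed.
Lemma ss_shift2 d F : ss d (fun m => F (S m)) = ss d F - F O + F d.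
Proof. pose proof (ss_shift d F). simpl in H. lra. Qed.
Lemma ss_term_le d F k : (forall m, (m < d)%nat -> 0 <= F m) -> (k < d)%nat -> F k <= ss d F.
Proof. induction d; intros H Hk; simpl; [lia|].
  assert (0 <= ss d F) by (apply ss_nonneg; intros; apply H; lia).
  destruct (Nat.eq_dec k d). subst. lra. pose proof (IHd ltac:(intros; apply H; lia) ltac:(lia)). pose proof (H d ltac:(lia)). lra. Qed.
Lemma ss_zero_inv d F : (forall m, (m < d)%nat -> 0 <= F m) -> ss d F <= 0 -> forall k, (k < d)%nat -> F k = 0.
Proof. intros H Hs k Hk. pose proof (ss_term_le d F k H Hk). pose proof (H k Hk). lra. Qed.
Lemma ss_ind0 d F : (0 < d)%nat -> ss d (fun m => (if Nat.eqb m 0 then 1 else 0) * F m) = F O.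
Proof. intros Hd. destruct d; [lia|]. rewrite ss_shift. simpl.
  rewrite (ss_ext _ _ (fun _ => 0)) by (intros; simpl; lra). rewrite ss_zero. lra. Qed.

Lemma sum_lt_ss n F : sum_lt n F = ss n F.
Proof. unfold sum_lt. induction n; [simpl; auto|]. rewrite seq_S, map_app, fold_right_app. simpl.
  cbn [ss]. rewrite <- IHn. generalize (F n). clear. intros r.
  induction (map F (seq 0 n)); simpl; lra. Qed.

Definition fget {d} (x : Fin.t d -> R) (m : nat) : R :=
  match lt_dec m d with left h => x (Fin.of_nat_lt h) | right _ => 0 end.
Definition f2n {d} (i : Fin.t d) : nat := proj1_sig (Fin.to_nat i).
Definition mkv (d : nat) (F : nat -> R) : vec d := fun i => F (f2n i).

Lemma f2n_lt {d} (i : Fin.t d) : (f2n i < d)%nat.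
Proof. unfold f2n. destruct (Fin.to_nat i); simpl; auto. Qed.

Lemma fget_out {d} (x : Fin.t d -> R) m : (d <= m)%nat -> fget x m = 0.
Proof. intros H. unfold fget. destruct (lt_dec m d); [lia|auto]. Qed.

Lemma fget_f2n {d} (x : Fin.t d -> R) i : fget x (f2n i) = x i.
Proof. unfold fget. destruct (lt_dec (f2n i) d) as [h|h].
  - f_equal. rewrite <- (Fin.of_nat_to_nat_inv i). unfold f2n in h |- *. apply Fin.of_nat_ext.
  - exfalso. apply h. apply f2n_lt. Qed.

Lemma fget_mkv d F m : (m < d)%nat -> fget (mkv d F) m = F m.
Proof. intros H. unfold fget. destruct (lt_dec m d); [|lia]. unfold mkv, f2n. rewrite Fin.to_nat_of_nat. reflexivity. Qed.

Lemma vec_ext {d} (x y : vec d) : (forall m, (m < d)%nat -> fget x m = fget y m) -> x = y.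
Proof. intros H. apply functional_extensionality. intros i. rewrite <- (fget_f2n x), <- (fget_f2n y). apply H, f2n_lt. Qed.

Lemma finsum_ss d (g : Fin.t d -> R) : finsum d g = ss d (fget g).
Proof. induction d.
  - reflexivity.
  - simpl finsum. rewrite ss_shift. rewrite IHd.
    assert (E1 : g Fin.F1 = fget g 0).
    { unfold fget. destruct (lt_dec 0 (S d)); [reflexivity|lia]. }
    assert (E2 : ss d (fget (fun k => g (Fin.FS k))) = ss d (fun m => fget g (S m))).
    { apply ss_ext. intros m Hm. unfold fget. destruct (lt_dec m d); [|lia]. destruct (lt_dec (S m) (S d)); [|lia].
      simpl. f_equal. f_equal. apply Fin.of_nat_ext. }
    rewrite E1, E2. reflexivity. Qed.

Lemma fget_vadd {d} (x y : vec d) m : fget (vadd x y) m = fget x m + fget y m.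
Proof. unfold fget, vadd. destruct (lt_dec m d); lra. Qed.
Lemma fget_vsub {d} (x y : vec d) m : fget (vsub x y) m = fget x m - fget y m.
Proof. unfold fget, vsub. destruct (lt_dec m d); lra. Qed.
Lemma fget_vscale {d} c (x : vec d) m : fget (vscale c x) m = c * fget x m.
Proof. unfold fget, vscale. destruct (lt_dec m d); lra. Qed.
Lemma fget_vzero {d} m : fget (@vzero d) m = 0.
Proof. unfold fget, vzero. destruct (lt_dec m d); lra. Qed.

Lemma inner_ss {d} (x y : vec d) : inner x y = ss d (fun m => fget x m * fget y m).
Proof. unfold inner. rewrite finsum_ss. apply ss_ext. intros m Hm. unfold fget. destruct (lt_dec m d); lra. Qed.
Lemma sqnorm_ss {d} (x : vec d) : sqnorm x = ss d (fun m => fget x m ^ 2).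
Proof. unfold sqnorm. rewrite inner_ss. apply ss_ext; intros; ring. Qed.
Lemma sqnorm_nonneg {d} (x : vec d) : 0 <= sqnorm x.
Proof. rewrite sqnorm_ss. apply ss_nonneg. intros; nra. Qed.

Lemma inner_sym {d} (x y : vec d) : inner x y = inner y x.
Proof. rewrite !inner_ss. apply ss_ext; intros; ring. Qed.
Lemma inner_addl {d} (x y z : vec d) : inner (vadd x y) z = inner x z + inner y z.
Proof. rewrite !inner_ss, <- ss_plus. apply ss_ext; intros; rewrite fget_vadd; ring. Qed.
Lemma inner_subl {d} (x y z : vec d) : inner (vsub x y) z = inner x z - inner y z.
Proof. rewrite !inner_ss, <- ss_minus. apply ss_ext; intros; rewrite fget_vsub; ring. Qed.
Lemma inner_scall {d} c (x z : vec d) : inner (vscale c x) z = c * inner x z.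
Proof. rewrite !inner_ss, <- ss_scal. apply ss_ext; intros; rewrite fget_vscale; ring. Qed.
Lemma inner_addr {d} (x y z : vec d) : inner z (vadd x y) = inner z x + inner z y.
Proof. rewrite (inner_sym z), inner_addl, !(inner_sym z). auto. Qed.
Lemma inner_subr {d} (x y z : vec d) : inner z (vsub x y) = inner z x - inner z y.
Proof. rewrite (inner_sym z), inner_subl, !(inner_sym z). auto. Qed.
Lemma inner_scalr {d} c (x z : vec d) : inner z (vscale c x) = c * inner z x.
Proof. rewrite (inner_sym z), inner_scall, !(inner_sym z). auto. Qed.

Record qspec := mkQ { al : nat -> R; la : nat -> R; bb : nat -> R }.
Definition lamL (l : nat -> R) (m : nat) : R := match m with O => 0 | S m' => l m' end.
Definition Qn d p (y : nat -> R) :=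
  ss d (fun m => al p m / 2 * y m ^ 2 - bb p m * y m + la p m / 2 * (y m - y (S m)) ^ 2).
Definition Gn p (y : nat -> R) m :=
  al p m * y m + la p m * (y m - y (S m)) + lamL (la p) m * (y m - y (pred m)) - bb p m.
Definition Mn p (y : nat -> R) m :=
  al p m * y m + la p m * (y m - y (S m)) + lamL (la p) m * (y m - y (pred m)).
Definition Rn d p (z : nat -> R) :=
  ss d (fun m => al p m / 2 * z m ^ 2 + la p m / 2 * (z m - z (S m)) ^ 2).
Lemma sqp (x : R) : 0 <= x ^ 2.
Proof. apply pow2_ge_0. Qed.
Hint Resolve sqp : core.
Ltac pos := repeat (first [lra | apply sqp | apply Rmult_le_pos | apply Rplus_le_le_0_compat]); lra.

Definition bnd d (l : nat -> R) := forall m, (pred d <= m)%nat -> l m = 0.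

Lemma shiftL d l phi : bnd d l ->
  ss d (fun m => l m * phi (S m)) = ss d (fun m => lamL l m * phi m).
Proof. intros Hb. pose proof (ss_shift2 d (fun m => lamL l m * phi m)) as E. simpl in E.
  rewrite E. destruct d as [|d']; simpl; [lra|]. rewrite (Hb d') by (simpl; lia). lra. Qed.

Lemma sbp d l y z : bnd d l ->
  ss d (fun m => l m * (y m - y (S m)) * (z m - z (S m))) =
  ss d (fun m => (l m * (y m - y (S m)) + lamL l m * (y m - y (pred m))) * z m).
Proof. intros Hb.
  pose proof (shiftL d l (fun k => (y (pred k) - y k) * z k) Hb) as E. simpl in E.
  transitivity (ss d (fun m => l m * (y m - y (S m)) * z m) - ss d (fun m => l m * ((y m - y (S m)) * z (S m)))).
  { rewrite <- ss_minus. apply ss_ext; intros; ring. }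
  rewrite E. rewrite <- ss_minus. apply ss_ext; intros; ring. Qed.

Lemma Q_expand d p y z : bnd d (la p) ->
  Qn d p (fun m => y m + z m) = Qn d p y + ss d (fun m => Gn p y m * z m) + Rn d p z.
Proof. intros Hb.
  rewrite (ss_ext d (fun m => Gn p y m * z m) (fun m => (al p m * y m - bb p m) * z m +
     (la p m * (y m - y (S m)) + lamL (la p) m * (y m - y (pred m))) * z m)) by (intros; unfold Gn; ring).
  rewrite ss_plus, <- sbp by auto. unfold Qn, Rn. rewrite <- !ss_plus. apply ss_ext; intros; field. Qed.

Lemma Rn_lower d p z c : (forall m, (m < d)%nat -> c <= al p m) -> (forall m, 0 <= la p m) ->
  c / 2 * ss d (fun m => z m ^ 2) <= Rn d p z.
Proof. intros H1 H2. rewrite <- ss_scal. apply ss_le. intros m Hm. pose proof (H1 m Hm). pose proof (H2 m).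
  assert (0 <= z m ^ 2) by pos. assert (0 <= la p m / 2 * (z m - z (S m)) ^ 2) by pos. cbv beta.
  assert (0 <= (al p m - c) * z m ^ 2) by (apply Rmult_le_pos; lra). lra. Qed.

Lemma Rn_nonneg d p z : (forall m, 0 <= al p m) -> (forall m, 0 <= la p m) -> 0 <= Rn d p z.
Proof. intros H1 H2. apply ss_nonneg. intros m Hm. pose proof (H1 m). pose proof (H2 m).
  assert (0 <= al p m / 2 * z m ^ 2) by pos.
  assert (0 <= la p m / 2 * (z m - z (S m)) ^ 2) by pos. lra. Qed.

Lemma lamL_nonneg l m : (forall m, 0 <= l m) -> 0 <= lamL l m.
Proof. intros H. destruct m; simpl; [lra|auto]. Qed.

Lemma links_upper d l z : bnd d l -> (forall m, 0 <= l m) ->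
  ss d (fun m => l m * (z m - z (S m)) ^ 2) <= 2 * ss d (fun m => (l m + lamL l m) * z m ^ 2).
Proof. intros Hb Hl.
  apply Rle_trans with (ss d (fun m => 2 * (l m * z m ^ 2)) + ss d (fun m => 2 * (l m * (z (S m) ^ 2)))).
  { rewrite <- ss_plus. apply ss_le. intros m _. pose proof (Hl m).
    assert (0 <= l m * (z m + z (S m)) ^ 2) by pos. cbv beta. nra. }
  rewrite !ss_scal. rewrite (shiftL d l (fun k => z k ^ 2)) by auto. rewrite <- Rmult_plus_distr_l, <- ss_plus.
  apply Req_le. f_equal. apply ss_ext; intros; ring. Qed.

Lemma Rn_upper d p z : bnd d (la p) -> (forall m, 0 <= al p m) -> (forall m, 0 <= la p m) ->
  Rn d p z <= ss d (fun m => (al p m / 2 + la p m + lamL (la p) m) * z m ^ 2).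
Proof. intros Hb H1 H2. unfold Rn. rewrite ss_plus.
  rewrite (ss_ext d (fun m => la p m / 2 * (z m - z (S m)) ^ 2) (fun m => /2 * (la p m * (z m - z (S m)) ^ 2))) by (intros; field).
  rewrite ss_scal. pose proof (links_upper d (la p) z Hb H2).
  rewrite (ss_ext d (fun m => (al p m / 2 + la p m + lamL (la p) m) * z m ^ 2)
     (fun m => al p m / 2 * z m ^ 2 + (la p m + lamL (la p) m) * z m ^ 2)) by (intros; ring).
  rewrite ss_plus. lra. Qed.

Lemma cs3 a b c X Y Z : 0 <= a -> 0 <= b -> 0 <= c ->
  (a * X + b * Y + c * Z) ^ 2 <= (a + b + c) * (a * X ^ 2 + b * Y ^ 2 + c * Z ^ 2).
Proof. intros. assert (0 <= a*b*(X-Y)^2 + a*c*(X-Z)^2 + b*c*(Y-Z)^2).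
  { pos. }
  nra. Qed.

Lemma Mn_smooth d p z mu0 w : bnd d (la p) -> 0 <= mu0 -> 0 <= w ->
  (forall m, (m < d)%nat -> mu0 <= al p m) -> (forall m, 0 <= la p m) ->
  (forall m, (m < d)%nat -> (al p m - mu0) + la p m + lamL (la p) m <= w) ->
  ss d (fun m => Mn p z m ^ 2) <= (mu0 + 2 * w) ^ 2 * ss d (fun m => z m ^ 2).
Proof. intros Hb Hm Hw Ha Hl Hr.
  set (th := fun m => al p m - mu0).
  set (A := fun m => th m * z m + la p m * (z m - z (S m)) + lamL (la p) m * (z m - z (pred m))).
  set (S0 := ss d (fun m => z m ^ 2)).
  set (E := ss d (fun m => A m * z m)).
  set (T := ss d (fun m => th m * z m ^ 2)).
  set (Lk := ss d (fun m => la p m * (z m - z (S m)) ^ 2)).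
  assert (HE : E = T + Lk).
  { unfold E, T, Lk.
    rewrite (ss_ext d (fun m => la p m * (z m - z (S m)) ^ 2) (fun m => la p m * (z m - z (S m)) * (z m - z (S m)))) by (intros; ring).
    rewrite (sbp d (la p) z z Hb), <- ss_plus. apply ss_ext; intros; unfold A; ring. }
  assert (HT : 0 <= T). { apply ss_nonneg; intros m Hm'. unfold th. pose proof (Ha m Hm'). pos. }
  assert (HL : 0 <= Lk). { apply ss_nonneg; intros m _. pose proof (Hl m). pos. }
  assert (HS : 0 <= S0). { apply ss_nonneg; intros; pos. }
  assert (HEb : E <= 2 * w * S0).
  { rewrite HE. unfold Lk. pose proof (links_upper d (la p) z Hb Hl) as U.
    apply Rle_trans with (T + 2 * ss d (fun m => (la p m + lamL (la p) m) * z m ^ 2)); [lra|].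
    unfold T. rewrite <- ss_scal, <- ss_plus. unfold S0. rewrite <- ss_scal. apply ss_le. intros m Hm'.
    pose proof (Hr m Hm'). pose proof (Hl m). pose proof (lamL_nonneg (la p) m Hl). pose proof (Ha m Hm'). unfold th.
    assert (0 <= z m ^ 2) by nra. nra. }
  assert (HA : ss d (fun m => A m ^ 2) <= 2 * w * E).
  { apply Rle_trans with (ss d (fun m => w * (th m * z m ^ 2 + la p m * (z m - z (S m)) ^ 2 + lamL (la p) m * (z m - z (pred m)) ^ 2))).
    { apply ss_le. intros m Hm'. unfold A. pose proof (Ha m Hm'). pose proof (Hl m). pose proof (lamL_nonneg (la p) m Hl).
      eapply Rle_trans. apply cs3; unfold th; lra. apply Rmult_le_compat_r.
      - unfold th. pos.
      - apply Hr; auto. }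
    rewrite ss_scal. rewrite !ss_plus.
    assert (Q : ss d (fun m => lamL (la p) m * (z m - z (pred m))^2) = ss d (fun m => la p m * (z m - z (S m))^2)).
    { rewrite <- (shiftL d (la p) (fun k => (z k - z (pred k))^2) Hb). apply ss_ext; intros; simpl; ring. }
    rewrite Q.
    fold T. fold Lk. rewrite HE. nra. }
  assert (HM : ss d (fun m => Mn p z m ^ 2) = mu0 ^ 2 * S0 + 2 * mu0 * E + ss d (fun m => A m ^ 2)).
  { unfold S0, E. rewrite <- !ss_scal, <- !ss_plus. apply ss_ext; intros. unfold Mn, A, th. ring. }
  rewrite HM. fold S0. nra. Qed.

Definition supp K (y : nat -> R) := forall m, (K <= m)%nat -> y m = 0.

Definition Pn (p : qspec) (m : nat) : R :=
  if Req_EM_T (la p m) 0 then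
    ((al p (pred m) + lamL (la p) m) * bb p m + lamL (la p) m * bb p (pred m)) /
      (al p m * al p (pred m) + lamL (la p) m * (al p m + al p (pred m)))
  else
    ((al p (S m) + la p m) * bb p m + la p m * bb p (S m)) /
      (al p m * al p (S m) + la p m * (al p m + al p (S m))).

Lemma Pn_c0 p m : la p m = 0 -> Pn p m =
    ((al p (pred m) + lamL (la p) m) * bb p m + lamL (la p) m * bb p (pred m)) /
      (al p m * al p (pred m) + lamL (la p) m * (al p m + al p (pred m))).
Proof. intros H. unfold Pn. destruct (Req_EM_T (la p m) 0); [reflexivity|contradiction]. Qed.
Lemma Pn_c1 p m : la p m <> 0 -> Pn p m =
    ((al p (S m) + la p m) * bb p m + la p m * bb p (S m)) /
      (al p m * al p (S m) + la p m * (al p m + al p (S m))).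
Proof. intros H. unfold Pn. destruct (Req_EM_T (la p m) 0); [contradiction|reflexivity]. Qed.

Lemma Pn_grad p : (forall m, 0 < al p m) -> (forall m, 0 <= la p m) ->
  (forall m, la p m = 0 \/ la p (S m) = 0) -> forall m, Gn p (Pn p) m = 0.
Proof. intros Ha Hl Hn m. unfold Gn.
  destruct (Req_EM_T (la p m) 0) as [h0|h0].
  - rewrite h0, (Pn_c0 p m h0). destruct m as [|m'].
    + simpl. pose proof (Ha 0%nat). field. lra.
    + simpl lamL. simpl pred. pose proof (Ha m'). pose proof (Ha (S m')). pose proof (Hl m').
      destruct (Req_EM_T (la p m') 0) as [h1|h1].
      * rewrite h1. field. lra.
      * rewrite (Pn_c1 p m' h1).
        assert (0 < al p (S m') * al p m' + la p m' * (al p (S m') + al p m')) by nra.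
        assert (0 < al p m' * al p (S m') + la p m' * (al p m' + al p (S m'))) by nra.
        field; repeat split; lra.
  - assert (hS : la p (S m) = 0) by (destruct (Hn m); auto; contradiction).
    assert (hL : lamL (la p) m = 0).
    { destruct m as [|m']; simpl; auto. destruct (Hn m'); auto. contradiction. }
    rewrite hL, (Pn_c1 p m h0), (Pn_c0 p (S m) hS). simpl lamL. simpl pred.
    pose proof (Ha m). pose proof (Ha (S m)). pose proof (Hl m).
    assert (0 < al p (S m) * al p m + la p m * (al p (S m) + al p m)) by nra.
    assert (0 < al p m * al p (S m) + la p m * (al p m + al p (S m))) by nra.
    field; repeat split; lra. Qed.

Lemma Pn_supp p K : supp K (bb p) -> supp (S K) (Pn p).
Proof. intros Hb m Hm. unfold Pn. destruct (Req_EM_T (la p m) 0).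
  - rewrite (Hb m) by lia. rewrite (Hb (pred m)) by lia. unfold Rdiv. ring.
  - rewrite (Hb m) by lia. rewrite (Hb (S m)) by lia. unfold Rdiv. ring. Qed.

Lemma Pn_supp0 p K : supp K (bb p) -> lamL (la p) K = 0 -> supp K (Pn p).
Proof. intros Hb HL m Hm. destruct (Nat.eq_dec m K) as [->|hne].
  - unfold Pn. destruct (Req_EM_T (la p K) 0).
    + rewrite HL, (Hb K) by lia. unfold Rdiv. ring.
    + rewrite (Hb K) by lia. rewrite (Hb (S K)) by lia. unfold Rdiv. ring.
  - apply (Pn_supp p K Hb). lia. Qed.

Lemma Gn_supp p y K : supp K y -> supp K (bb p) -> supp (S K) (Gn p y).
Proof. intros Hy Hb m Hm. unfold Gn. rewrite (Hy m), (Hy (S m)), (Hy (pred m)), (Hb m) by lia. ring. Qed.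

Lemma Gn_supp0 p y K : supp K y -> supp K (bb p) -> lamL (la p) K = 0 -> supp K (Gn p y).
Proof. intros Hy Hb HL m Hm. destruct (Nat.eq_dec m K) as [->|hne].
  - unfold Gn. rewrite HL, (Hy K), (Hy (S K)), (Hb K) by lia. ring.
  - apply (Gn_supp p y K Hy Hb). lia. Qed.

Lemma supp_mono K K' y : (K <= K')%nat -> supp K y -> supp K' y.
Proof. intros H1 H2 m Hm. apply H2. lia. Qed.

Lemma Qn_restr d p y y' : bnd d (la p) -> (forall m, (m < d)%nat -> y m = y' m) -> Qn d p y = Qn d p y'.
Proof. intros Hb H. unfold Qn. apply ss_ext. intros m Hm. rewrite (H m Hm).
  destruct (Nat.lt_ge_cases (S m) d). - rewrite (H (S m)); auto.
  - rewrite (Hb m) by lia. field. Qed.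

Lemma Gn_restr d p y y' m : bnd d (la p) -> (forall m, (m < d)%nat -> y m = y' m) -> (m < d)%nat ->
  Gn p y m = Gn p y' m.
Proof. intros Hb H Hm. unfold Gn. rewrite (H m Hm), (H (pred m)) by lia.
  destruct (Nat.lt_ge_cases (S m) d). - rewrite (H (S m)); auto.
  - rewrite (Hb m) by lia. ring. Qed.

Lemma Gn_minus p y y' m : Gn p y m - Gn p y' m = Mn p (fun k => y k - y' k) m.
Proof. unfold Gn, Mn. ring. Qed.

Definition e0v d : vec d := mkv d (fun m => if Nat.eqb m 0 then 1 else 0).
Definition hw {d} (x0 : vec d) : vec d := vsub x0 (vscale (vnorm x0) (e0v d)).
Definition HH {d} (x0 : vec d) (v : vec d) : vec d :=
  if Req_EM_T (sqnorm (hw x0)) 0 then v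
  else vsub v (vscale (2 * inner (hw x0) v / sqnorm (hw x0)) (hw x0)).

Section HHs.
Context {d : nat} (x0 : vec d).

Lemma HH_add u v : HH x0 (vadd u v) = vadd (HH x0 u) (HH x0 v).
Proof. unfold HH. destruct (Req_EM_T (sqnorm (hw x0)) 0); auto.
  rewrite inner_addr. apply functional_extensionality; intro k. unfold vadd, vsub, vscale. field. auto. Qed.
Lemma HH_scale c v : HH x0 (vscale c v) = vscale c (HH x0 v).
Proof. unfold HH. destruct (Req_EM_T (sqnorm (hw x0)) 0); auto.
  rewrite inner_scalr. apply functional_extensionality; intro k. unfold vsub, vscale. field. auto. Qed.
Lemma HH_sub u v : HH x0 (vsub u v) = vsub (HH x0 u) (HH x0 v).
Proof. unfold HH. destruct (Req_EM_T (sqnorm (hw x0)) 0); auto.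
  rewrite inner_subr. apply functional_extensionality; intro k. unfold vsub, vscale. field. auto. Qed.
Lemma HH_inner u v : inner (HH x0 u) (HH x0 v) = inner u v.
Proof. unfold HH. destruct (Req_EM_T (sqnorm (hw x0)) 0); auto.
  rewrite !inner_subl, !inner_subr, !inner_scall, !inner_scalr. unfold sqnorm in *.
  rewrite ?(inner_sym v (hw x0)), ?(inner_sym u (hw x0)), ?(inner_sym (hw x0) u). field. auto. Qed.
Lemma HH_inv v : HH x0 (HH x0 v) = v.
Proof. unfold HH at 1. destruct (Req_EM_T (sqnorm (hw x0)) 0) as [e|n].
  - unfold HH. destruct (Req_EM_T (sqnorm (hw x0)) 0); auto. contradiction.
  - unfold HH. destruct (Req_EM_T (sqnorm (hw x0)) 0); [contradiction|].
    rewrite inner_subr, inner_scalr. fold (sqnorm (hw x0)).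
    apply functional_extensionality; intro k. unfold vsub, vscale. field. auto. Qed.
Lemma HH_sqnorm v : sqnorm (HH x0 v) = sqnorm v.
Proof. unfold sqnorm. apply HH_inner. Qed.
Lemma HH_sym u v : inner (HH x0 u) v = inner u (HH x0 v).
Proof. rewrite <- (HH_inv v) at 1. rewrite HH_inner. auto. Qed.
Lemma HH_zero : HH x0 vzero = vzero.
Proof. assert (E : (@vzero d) = vscale 0 vzero) by (apply functional_extensionality; intro; unfold vscale, vzero; ring).
  rewrite E, HH_scale. apply functional_extensionality; intro; unfold vscale; ring. Qed.

Lemma fget_e0 m : (0 < d)%nat -> fget (e0v d) m = if Nat.eqb m 0 then 1 else 0.
Proof. intros Hd. destruct (lt_dec m d). - unfold e0v. rewrite fget_mkv; auto.
  - rewrite fget_out by lia. destruct (Nat.eqb_spec m 0); [lia|auto]. Qed.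

Lemma HH_x0 : (0 < d)%nat -> supp 1 (fget (HH x0 x0)).
Proof. intros Hd.
  set (r := vnorm x0).
  assert (Hr2 : sqnorm x0 = r * r). { unfold r, vnorm. rewrite sqrt_sqrt; auto. apply sqnorm_nonneg. }
  assert (He0x : inner (e0v d) x0 = fget x0 0).
  { rewrite inner_ss. rewrite <- (ss_ind0 d (fget x0) Hd). apply ss_ext; intros m Hm. rewrite fget_e0; auto. }
  assert (He0e0 : inner (e0v d) (e0v d) = 1).
  { rewrite inner_ss. transitivity (ss d (fun m => (if Nat.eqb m 0 then 1 else 0) * (fun _ => 1) m)).
    - apply ss_ext; intros m Hm. rewrite fget_e0; auto. destruct (Nat.eqb m 0); ring.
    - apply ss_ind0; auto. }
  intros m Hm. unfold HH. destruct (Req_EM_T (sqnorm (hw x0)) 0) as [e|n].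
  - destruct (lt_dec m d) as [hm|hm]; [|apply fget_out; lia].
    rewrite sqnorm_ss in e. pose proof (ss_zero_inv d _ (fun m _ => sqp _) (Req_le _ _ e) m hm) as Z.
    simpl in Z. unfold hw in Z. rewrite fget_vsub, fget_vscale, fget_e0 in Z by auto.
    destruct (Nat.eqb_spec m 0); [lia|]. nra.
  - assert (Hw : inner (hw x0) x0 = r * r - r * fget x0 0).
    { unfold hw. rewrite inner_subl, inner_scall. fold (sqnorm x0). rewrite He0x, Hr2. fold r. ring. }
    assert (HW : sqnorm (hw x0) = 2 * (r * r - r * fget x0 0)).
    { unfold sqnorm, hw. rewrite !inner_subl, !inner_subr, !inner_scall, !inner_scalr. fold (sqnorm x0).
      rewrite (inner_sym x0 (e0v d)), He0x, He0e0, Hr2. fold r. ring. }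
    rewrite fget_vsub, fget_vscale, Hw, HW. unfold hw. rewrite fget_vsub, fget_vscale.
    rewrite (fget_e0 m) by auto. destruct (Nat.eqb_spec m 0); [lia|].
    destruct (lt_dec m d) as [hm|hm]; [|rewrite !fget_out by lia; ring].
    assert (r * r - r * fget x0 0 <> 0) by (intro X; apply n; rewrite HW, X; ring).
    field. auto. Qed.
End HHs.

Section Funs.
Context {d : nat} (x0 : vec d).
Definition yof (x : vec d) : nat -> R := fget (HH x0 (vsub x x0)).
Definition fQ (p : qspec) (x : vec d) : R := Qn d p (yof x).
Definition gQ (p : qspec) (x : vec d) : vec d := HH x0 (mkv d (Gn p (yof x))).
Definition pprox (p : qspec) (g : R) (z : nat -> R) : qspec :=
  mkQ (fun m => al p m + / g) (la p) (fun m => bb p m + z m / g).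
Definition pQ (p : qspec) (g : R) (x : vec d) : vec d :=
  vadd x0 (HH x0 (mkv d (Pn (pprox p g (yof x))))).

Lemma yof_diff x y m : yof y m = yof x m + fget (HH x0 (vsub y x)) m.
Proof. unfold yof. assert (E : vsub y x0 = vadd (vsub x x0) (vsub y x)).
  { apply functional_extensionality; intro; unfold vsub, vadd; ring. }
  rewrite E, HH_add, fget_vadd. auto. Qed.

Lemma inner_mkv G (v : vec d) : inner (mkv d G) v = ss d (fun m => G m * fget v m).
Proof. rewrite inner_ss. apply ss_ext; intros. rewrite fget_mkv; auto. Qed.

Lemma ss_HH v : ss d (fun m => fget (HH x0 v) m ^ 2) = sqnorm v.
Proof. rewrite <- sqnorm_ss. apply HH_sqnorm. Qed.

Lemma fQ_expand p x y : bnd d (la p) ->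
  fQ p y - fQ p x - inner (gQ p x) (vsub y x) = Rn d p (fget (HH x0 (vsub y x))).
Proof. intros Hb. unfold fQ at 1.
  replace (yof y) with (fun m => yof x m + fget (HH x0 (vsub y x)) m)
    by (apply functional_extensionality; intro; rewrite (yof_diff x y); auto).
  rewrite Q_expand by auto. unfold gQ. rewrite HH_sym, inner_mkv. unfold fQ. ring. Qed.

Lemma vsub_vadd (x h : vec d) : vsub (vadd x h) x = h.
Proof. apply functional_extensionality; intro; unfold vsub, vadd; ring. Qed.

Lemma sqnorm_vnorm (h : vec d) : sqnorm h = vnorm h ^ 2.
Proof. unfold vnorm. rewrite pow2_sqrt; auto. apply sqnorm_nonneg. Qed.

Lemma fQ_grad p : bnd d (la p) -> (forall m, 0 <= al p m) -> (forall m, 0 <= la p m) ->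
  has_gradient (fQ p) (gQ p).
Proof. intros Hb Ha Hl x eps Heps.
  set (co := fun m => al p m / 2 + la p m + lamL (la p) m).
  assert (Hco : forall m, 0 <= co m).
  { intros m. unfold co. pose proof (Ha m). pose proof (Hl m). pose proof (lamL_nonneg (la p) m Hl). lra. }
  set (Cb := ss d co + 1).
  assert (HCb : 0 < Cb) by (unfold Cb; pose proof (ss_nonneg d co (fun m _ => Hco m)); lra).
  exists (eps / Cb). split. { apply Rdiv_lt_0_compat; auto. }
  intros h Hh. pose proof (fQ_expand p x (vadd x h) Hb) as E. rewrite vsub_vadd in E.
  set (dl := fget (HH x0 h)) in E.
  assert (R0 : 0 <= Rn d p dl) by (apply Rn_nonneg; auto).
  assert (R1 : Rn d p dl <= Cb * sqnorm h).
  { eapply Rle_trans. apply Rn_upper; auto. rewrite <- (ss_HH h). fold dl. rewrite <- ss_scal. apply ss_le.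
    intros m Hm. pose proof (ss_term_le d co m (fun m _ => Hco m) Hm). fold (co m). unfold Cb.
    apply Rmult_le_compat_r; [apply sqp|lra]. }
  rewrite Rabs_pos_eq by lra. rewrite E.
  rewrite sqnorm_vnorm in R1. assert (0 <= vnorm h) by (apply sqrt_pos).
  apply Rle_trans with (Cb * vnorm h ^ 2); auto.
  assert (vnorm h * Cb <= eps). { apply Rmult_le_reg_r with (/ Cb). apply Rinv_0_lt_compat; auto.
    rewrite Rmult_assoc, Rinv_r by lra. unfold Rdiv in Hh. lra. }
  nra. Qed.

Lemma fQ_sc p c x y : bnd d (la p) -> (forall m, (m < d)%nat -> c <= al p m) -> (forall m, 0 <= la p m) ->
  fQ p y >= fQ p x + inner (gQ p x) (vsub y x) + c / 2 * sqnorm (vsub y x).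
Proof. intros Hb Ha Hl. pose proof (fQ_expand p x y Hb) as E.
  pose proof (Rn_lower d p (fget (HH x0 (vsub y x))) c Ha Hl) as L. rewrite ss_HH in L. lra. Qed.

Lemma gQ_smooth p mu0 w x y : bnd d (la p) -> 0 <= mu0 -> 0 <= w ->
  (forall m, (m < d)%nat -> mu0 <= al p m) -> (forall m, 0 <= la p m) ->
  (forall m, (m < d)%nat -> (al p m - mu0) + la p m + lamL (la p) m <= w) ->
  sqnorm (vsub (gQ p x) (gQ p y)) <= (mu0 + 2 * w) ^ 2 * sqnorm (vsub x y).
Proof. intros Hb H0 H1 H2 H3 H4. unfold gQ. rewrite <- HH_sub, HH_sqnorm, sqnorm_ss.
  rewrite <- (ss_HH (vsub x y)).
  eapply Rle_trans; [|apply (Mn_smooth d p (fget (HH x0 (vsub x y))) mu0 w); auto].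
  apply Req_le. apply ss_ext. intros m Hm. rewrite fget_vsub, !fget_mkv by auto. rewrite Gn_minus.
  f_equal. f_equal. apply functional_extensionality; intro k. rewrite (yof_diff y x k). ring. Qed.

Definition objp p g x v := fQ p v + / (2 * g) * sqnorm (vsub x v).

Lemma objp_eq p g x v : 0 < g ->
  objp p g x v = Qn d (pprox p g (yof x)) (yof v) + / (2 * g) * ss d (fun m => yof x m ^ 2).
Proof. intros Hg. unfold objp, fQ. rewrite <- (HH_sqnorm x0 (vsub x v)), sqnorm_ss.
  rewrite (ss_ext d (fun m => fget (HH x0 (vsub x v)) m ^ 2) (fun m => (yof x m - yof v m) ^ 2))
    by (intros; rewrite (yof_diff v x); ring).
  unfold Qn. rewrite <- !ss_scal, <- !ss_plus. apply ss_ext; intros; simpl. field. lra. Qed.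

Lemma pQ_prox p g x : bnd d (la p) -> (forall m, 0 <= al p m) -> (forall m, 0 <= la p m) ->
  (forall m, la p m = 0 \/ la p (S m) = 0) -> 0 < g ->
  is_prox_unique (fQ p) g x (pQ p g x).
Proof. intros Hb Ha Hl Hn Hg.
  set (p' := pprox p g (yof x)). set (P := Pn p').
  assert (Ha' : forall m, 0 < al p' m). { intros m; simpl. pose proof (Ha m). pose proof (Rinv_0_lt_compat g Hg). lra. }
  assert (HG : forall m, Gn p' P m = 0) by (apply Pn_grad; auto).
  assert (Hyu : forall m, (m < d)%nat -> yof (pQ p g x) m = P m).
  { intros m Hm. unfold yof, pQ.
    assert (E : vsub (vadd x0 (HH x0 (mkv d P))) x0 = HH x0 (mkv d P))
      by (apply functional_extensionality; intro; unfold vsub, vadd; ring).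
    fold p'. fold P. rewrite E, HH_inv, fget_mkv; auto. }
  assert (Hb' : bnd d (la p')) by (simpl; auto).
  assert (Key : forall v, Qn d p' (yof v) = Qn d p' (yof (pQ p g x)) + Rn d p' (fun m => yof v m - P m)).
  { intros v. rewrite (Qn_restr d p' (yof (pQ p g x)) P Hb' Hyu).
    replace (yof v) with (fun m => P m + (yof v m - P m)) at 1 by (apply functional_extensionality; intro; ring).
    rewrite Q_expand by auto. rewrite (ss_ext d _ (fun _ => 0)) by (intros m _; rewrite HG; ring).
    rewrite ss_zero. ring. }
  assert (Hlow : forall v, / g / 2 * ss d (fun m => (yof v m - P m) ^ 2) <= Rn d p' (fun m => yof v m - P m)).
  { intros v. apply Rn_lower; auto. intros m _. simpl. pose proof (Ha m). lra. }
  assert (Hg' : 0 < / g / 2) by (pose proof (Rinv_0_lt_compat g Hg); lra).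
  split.
  - intros v. fold (objp p g x (pQ p g x)). fold (objp p g x v).
    rewrite !objp_eq by auto. fold p'. rewrite (Key v).
    pose proof (Hlow v). assert (0 <= ss d (fun m => (yof v m - P m) ^ 2)) by (apply ss_nonneg; intros; apply sqp).
    nra.
  - intros v Hv. specialize (Hv (pQ p g x)). fold (objp p g x (pQ p g x)) in Hv. fold (objp p g x v) in Hv.
    rewrite !objp_eq in Hv by auto. fold p' in Hv. rewrite (Key v) in Hv.
    pose proof (Hlow v).
    assert (Z : forall m, (m < d)%nat -> (yof v m - P m) ^ 2 = 0).
    { apply ss_zero_inv. intros; apply sqp. nra. }
    assert (E1 : HH x0 (vsub v x0) = mkv d P).
    { apply vec_ext. intros m Hm. rewrite fget_mkv by auto. fold (yof v). pose proof (Z m Hm).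
      assert (yof v m - P m = 0) by (destruct (Req_dec (yof v m - P m) 0) as [e|e]; auto; exfalso; apply (pow_nonzero _ 2 e); auto). lra. }
    unfold pQ. fold p'. fold P. rewrite <- E1, HH_inv. apply functional_extensionality; intro; unfold vadd, vsub; ring.
Qed.

Definition SK K (x : vec d) := supp K (fget (HH x0 x)).

Lemma SK_add K u v : SK K u -> SK K v -> SK K (vadd u v).
Proof. intros H1 H2 m Hm. rewrite HH_add, fget_vadd, H1, H2 by auto. ring. Qed.
Lemma SK_scale K c u : SK K u -> SK K (vscale c u).
Proof. intros H1 m Hm. rewrite HH_scale, fget_vscale, H1 by auto. ring. Qed.
Lemma SK_zero K : SK K vzero.
Proof. intros m Hm. rewrite HH_zero, fget_vzero. auto. Qed.
Lemma SK_mono K K' u : (K <= K')%nat -> SK K u -> SK K' u.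
Proof. intros H1 H2. apply (supp_mono K); auto. Qed.

Lemma supp_mkv K G : supp K G -> supp K (fget (mkv d G)).
Proof. intros H m Hm. destruct (lt_dec m d). rewrite fget_mkv; auto. apply fget_out; lia. Qed.

Lemma yof_supp K x : (0 < d)%nat -> (1 <= K)%nat -> SK K x -> supp K (yof x).
Proof. intros Hd HK H m Hm. unfold yof. rewrite HH_sub, fget_vsub, H by auto. rewrite (HH_x0 x0 Hd m) by lia. ring. Qed.

Lemma gQ_SK p K x : (0 < d)%nat -> (1 <= K)%nat -> SK K x -> supp K (bb p) -> SK (S K) (gQ p x).
Proof. intros Hd HK H Hb. unfold SK, gQ. rewrite HH_inv. apply supp_mkv. apply Gn_supp; auto. apply yof_supp; auto. Qed.
Lemma gQ_SK0 p K x : (0 < d)%nat -> (1 <= K)%nat -> SK K x -> supp K (bb p) -> lamL (la p) K = 0 -> SK K (gQ p x).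
Proof. intros Hd HK H Hb HL. unfold SK, gQ. rewrite HH_inv. apply supp_mkv. apply Gn_supp0; auto. apply yof_supp; auto. Qed.

Lemma bprox_supp p g x K : (0 < d)%nat -> (1 <= K)%nat -> SK K x -> supp K (bb p) -> supp K (bb (pprox p g (yof x))).
Proof. intros Hd HK H Hb m Hm. simpl. rewrite Hb, (yof_supp K x) by auto. unfold Rdiv; ring. Qed.

Lemma pQ_SK p g K x : (0 < d)%nat -> (1 <= K)%nat -> SK K x -> supp K (bb p) -> SK (S K) (pQ p g x).
Proof. intros Hd HK H Hb m Hm. unfold pQ. rewrite HH_add, HH_inv, fget_vadd.
  rewrite (HH_x0 x0 Hd m) by lia. rewrite (supp_mkv (S K)); [ring| |lia].
  apply Pn_supp. apply bprox_supp; auto. Qed.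
Lemma pQ_SK0 p g K x : (0 < d)%nat -> (1 <= K)%nat -> SK K x -> supp K (bb p) -> lamL (la p) K = 0 -> SK K (pQ p g x).
Proof. intros Hd HK H Hb HL m Hm. unfold pQ. rewrite HH_add, HH_inv, fget_vadd.
  rewrite (HH_x0 x0 Hd m) by lia. rewrite (supp_mkv K); [ring| |lia].
  apply Pn_supp0; simpl; auto. apply bprox_supp; auto. Qed.

Lemma SK_x0 K : (0 < d)%nat -> (1 <= K)%nat -> SK K x0.
Proof. intros Hd HK m Hm. apply (HH_x0 x0 Hd). lia. Qed.
End Funs.

Section Inv.
Context {n : nat} (A : PIFO n) (d : nat) (fs : nat -> vec d -> R)
  (gs : nat -> vec d -> vec d) (px : nat -> R -> vec d -> vec d)
  (SKf : nat -> vec d -> Prop) (Cnd : nat -> Prop) (adv : nat -> nat).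
Hypothesis Hadd : forall K u v, SKf K u -> SKf K v -> SKf K (vadd u v).
Hypothesis Hscale : forall K c u, SKf K u -> SKf K (vscale c u).
Hypothesis Hzero : forall K, SKf K vzero.
Hypothesis Hmono : forall K K' u, (K <= K')%nat -> SKf K u -> SKf K' u.
Hypothesis Hinit : forall K, Cnd K -> SKf K (init A d).
Hypothesis Hcnd : forall K i, Cnd K -> Cnd (K + adv i)%nat.
Hypothesis Hgs : forall K i x, Cnd K -> SKf K x -> SKf (K + adv i)%nat (gs i x).
Hypothesis Hpx : forall K i g x, Cnd K -> SKf K x -> SKf (K + adv i)%nat (px i g x).

Definition InvS K (st : list (vec d) * list (oracle_ans d)) :=
  Forall (SKf K) (fst st) /\ Forall (fun a => SKf K (ans_grad a) /\ SKf K (ans_prox a)) (snd st).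

Lemma last_P (P : vec d -> Prop) xs x : Forall P xs -> P x -> P (last xs x).
Proof. intros H Hx. induction H; simpl; auto. destruct l; auto. Qed.

Lemma lincomb_P K a vs k : Forall (SKf K) vs -> SKf K (lincomb a vs k).
Proof. intros H. revert k. induction H; intros k; simpl; auto. Qed.

Lemma Forall_mono_K K K' l : (K <= K')%nat -> Forall (SKf K) l -> Forall (SKf K') l.
Proof. intros H1 H2. eapply Forall_impl; [|exact H2]. intros; eapply Hmono; eauto. Qed.

Lemma step_inv K st i : Cnd K -> InvS K st -> InvS (K + adv i)%nat (step A d fs gs px st i).
Proof. intros HC [H1 H2]. destruct st as [xs h]. simpl in H1, H2. unfold step.
  set (x := last xs (init A d)).
  assert (Hx : SKf K x) by (apply last_P; auto).
  set (g := gam A d (S (length h))).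
  set (ans := mkAns d i (fs i x) (gs i x) (px i g x)).
  assert (Hh' : Forall (fun a => SKf (K + adv i) (ans_grad a) /\ SKf (K + adv i) (ans_prox a)) (h ++ [ans])).
  { apply Forall_app. split.
    - eapply Forall_impl; [|exact H2]. intros a [Ha Hb]. split; apply (Hmono K); auto; lia.
    - constructor; [|constructor]. simpl. split; auto. }
  destruct (rule A d (h ++ [ans])) as [[a b] c]. split; simpl; auto.
  apply Forall_app. split.
  - apply (Forall_mono_K K); auto. lia.
  - constructor; [|constructor]. apply Hadd.
    + apply lincomb_P. apply (Forall_mono_K K); auto. lia.
    + apply Hadd; apply lincomb_P.
      * apply Forall_map. eapply Forall_impl; [|exact Hh']. simpl. tauto.
      * apply Forall_map. eapply Forall_impl; [|exact Hh']. simpl. tauto. Qed.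

Fixpoint sadv (l : list nat) : nat := match l with [] => O | i :: l' => (adv i + sadv l')%nat end.

Lemma fold_inv l : forall K st, Cnd K -> InvS K st -> InvS (K + sadv l)%nat (fold_left (step A d fs gs px) l st).
Proof. induction l as [|i l IH]; intros K st HC HI; simpl.
  - rewrite Nat.add_0_r. auto.
  - replace (K + (adv i + sadv l))%nat with ((K + adv i) + sadv l)%nat by lia.
    apply IH; auto. apply step_inv; auto. Qed.

Lemma iterate_SK K l : Cnd K -> SKf (K + sadv l)%nat (iterate A d fs gs px l).
Proof. intros HC. unfold iterate.
  assert (I0 : InvS K ([init A d], [])) by (split; simpl; auto).
  destruct (fold_inv l K _ HC I0) as [H1 _]. apply last_P; auto. apply Hinit.
  (* need Cnd (K + sadv l) *)
  clear -HC Hcnd. revert K HC. induction l; intros K HC; simpl. rewrite Nat.add_0_r; auto.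
  replace (K + (adv a + sadv l))%nat with ((K + adv a) + sadv l)%nat by lia. apply IHl. auto. Qed.
End Inv.

Definition lsum {A} (L : list A) (F : A -> R) := fold_right Rplus 0 (map F L).

Lemma lsum_app {A} (L1 L2 : list A) F : lsum (L1 ++ L2) F = lsum L1 F + lsum L2 F.
Proof. unfold lsum. rewrite map_app, fold_right_app. induction L1; simpl; [lra|]. rewrite IHL1. lra. Qed.
Lemma lsum_flat_map {A B} (g : A -> list B) L F : lsum (flat_map g L) F = lsum L (fun a => lsum (g a) F).
Proof. induction L; simpl; [reflexivity|]. rewrite lsum_app. unfold lsum at 3. simpl. fold (lsum L (fun a => lsum (g a) F)). rewrite IHL. auto. Qed.
Lemma lsum_map {A B} (h : A -> B) L F : lsum (map h L) F = lsum L (fun a => F (h a)).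
Proof. unfold lsum. rewrite map_map. auto. Qed.
Lemma lsum_ext {A} (L : list A) F G : (forall a, In a L -> F a = G a) -> lsum L F = lsum L G.
Proof. intros H. induction L; simpl; auto. unfold lsum in *; simpl. rewrite H by (left; auto). rewrite IHL; auto. intros; apply H; right; auto. Qed.
Lemma lsum_scal {A} (L : list A) c F : lsum L (fun a => c * F a) = c * lsum L F.
Proof. induction L; unfold lsum in *; simpl; [ring|]. rewrite IHL. ring. Qed.
Lemma lsum_plus {A} (L : list A) F G : lsum L (fun a => F a + G a) = lsum L F + lsum L G.
Proof. induction L; unfold lsum in *; simpl; [ring|]. rewrite IHL. ring. Qed.
Lemma lsum_le {A} (L : list A) F G : (forall a, In a L -> F a <= G a) -> lsum L F <= lsum L G.
Proof. intros H. induction L; unfold lsum in *; simpl; [lra|]. pose proof (H a (or_introl eq_refl)).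
  assert (fold_right Rplus 0 (map F L) <= fold_right Rplus 0 (map G L)) by (apply IHL; intros; apply H; right; auto). lra. Qed.
Lemma lsum_seq n F : lsum (seq 0 n) F = ss n F.
Proof. rewrite <- sum_lt_ss. reflexivity. Qed.

Definition prodf (phi : nat -> R) (l : list nat) : R := fold_right (fun i r => phi i * r) 1 l.
Lemma prodf_app phi l j : prodf phi (l ++ [j]) = prodf phi l * phi j.
Proof. induction l; simpl; [ring|]. rewrite IHl. ring. Qed.
Lemma weight_app p l j : weight p (l ++ [j]) = weight p l * p j.
Proof. induction l; simpl; [ring|]. rewrite IHl. ring. Qed.

Lemma expect_mult n p t phi : expect n p t (prodf phi) = (ss n (fun i => p i * phi i)) ^ t.
Proof. induction t.
  - unfold expect. simpl. ring.
  - change (expect n p (S t) (prodf phi)) with (lsum (idx_seqs n (S t)) (fun l => weight p l * prodf phi l)).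
    simpl idx_seqs. rewrite lsum_flat_map.
    rewrite (lsum_ext _ _ (fun l => (weight p l * prodf phi l) * ss n (fun i => p i * phi i))).
    + rewrite (lsum_ext _ _ (fun l => ss n (fun i => p i * phi i) * (weight p l * prodf phi l))) by (intros; ring).
      rewrite lsum_scal. change (lsum (idx_seqs n t) (fun l => weight p l * prodf phi l)) with (expect n p t (prodf phi)).
      rewrite IHt. simpl. ring.
    + intros l _. rewrite lsum_map, lsum_seq. rewrite <- ss_scal. apply ss_ext; intros.
      rewrite weight_app, prodf_app. ring. Qed.

Lemma idx_seqs_in n t l : In l (idx_seqs n t) -> Forall (fun i => (i < n)%nat) l.
Proof. revert l. induction t; intros l H; simpl in H.
  - destruct H as [<-|[]]. constructor.
  - apply in_flat_map in H. destruct H as [l0 [H1 H2]]. apply in_map_iff in H2. destruct H2 as [j [<- H3]].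
    apply in_seq in H3. apply Forall_app. split; auto. constructor; [lia|constructor]. Qed.

Lemma weight_nonneg (p : nat -> R) n l : (forall j, (j < n)%nat -> 0 <= p j) -> Forall (fun i => (i < n)%nat) l -> 0 <= weight p l.
Proof. intros Hp H. induction H; simpl; [lra|]. apply Rmult_le_pos; auto. Qed.

Lemma expect_le n p t F G : (forall j, (j < n)%nat -> 0 <= p j) ->
  (forall l, In l (idx_seqs n t) -> F l <= G l) -> expect n p t F <= expect n p t G.
Proof. intros Hp H. change (lsum (idx_seqs n t) (fun l => weight p l * F l) <= lsum (idx_seqs n t) (fun l => weight p l * G l)).
  apply lsum_le. intros l Hl. apply Rmult_le_compat_l; auto. eapply weight_nonneg; eauto. eapply idx_seqs_in; eauto. Qed.

Lemma expect_lin n p t a F b G : expect n p t (fun l => a * F l + b * G l) = a * expect n p t F + b * expect n p t G.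
Proof. change (lsum (idx_seqs n t) (fun l => weight p l * (a * F l + b * G l)) =
   a * lsum (idx_seqs n t) (fun l => weight p l * F l) + b * lsum (idx_seqs n t) (fun l => weight p l * G l)).
  rewrite <- !lsum_scal, <- lsum_plus. apply lsum_ext; intros; ring. Qed.

Lemma sqp' (x : R) : 0 <= x ^ 2.
Proof. apply pow2_ge_0. Qed.

Lemma powS x n : x ^ S n = x * x ^ n.
Proof. reflexivity. Qed.

Lemma nat_ceil r : 0 <= r -> exists k : nat, r <= INR k <= r + 1.
Proof. intros Hr. destruct (archimed r) as [H1 H2]. exists (Z.to_nat (up r)).
  assert (0 <= up r)%Z. { apply le_IZR. lra. }
  rewrite INR_IZR_INZ, Z2Nat.id by auto. lra. Qed.

Lemma exp_pow x t : exp x ^ t = exp (x * INR t).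
Proof. induction t. simpl. rewrite Rmult_0_r, exp_0. auto.
  rewrite S_INR, powS, IHt, <- exp_plus. f_equal. ring. Qed.

Lemma one_minus_exp x : 0 <= x <= 1/2 -> exp (-(2 * x)) <= 1 - x.
Proof. intros H. pose proof (exp_ineq1_le (2 * x)).
  assert (E : exp (-(2*x)) * exp (2 * x) = 1) by (rewrite <- exp_plus; replace (-(2*x) + 2*x) with 0 by ring; apply exp_0).
  assert (0 < exp (-(2*x))) by apply exp_pos.
  assert ((1 - x) * (1 + 2 * x) >= 1) by nra. nra. Qed.

Lemma exp_mono a b : a <= b -> exp a <= exp b.
Proof. intros H. destruct (Rle_lt_or_eq_dec a b H) as [h|h]. apply Rlt_le, exp_increasing; auto. rewrite h; lra. Qed.

Lemma pow_lt_mono a b n : 0 <= a < b -> a ^ S n < b ^ S n.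
Proof. intros H. induction n. simpl. lra. rewrite (powS a), (powS b). assert (0 <= a ^ S n) by (apply pow_le; lra). nra. Qed.

Lemma sq_le_inv a b : 0 <= a -> 0 <= b -> a ^ 2 <= b ^ 2 -> a <= b.
Proof. intros. nra. Qed.

Lemma final_num Delta eps s x t dd lam :
  0 < Delta -> 0 < eps -> eps / Delta <= 327 / 100000 -> lam = ln (Delta / eps) ->
  0 < s <= 9/10 -> 0 <= x <= 1/2 -> INR t * (2 * x) <= lam / 10 -> lam <= INR dd * s ->
  eps <= Delta / (1 + (1 - s)) * ((1 - s) ^ 2 * (1 - x) ^ t - ((1 - s) ^ 2) ^ dd).
Proof. intros HD He Hu Hl Hs Hx Ht Hd.
  set (q := 1 - s). set (u := eps / Delta).
  assert (Hu0 : 0 < u) by (unfold u; apply Rdiv_lt_0_compat; auto).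
  assert (Hlu : lam = - ln u). { rewrite Hl. unfold u. rewrite <- ln_Rinv by auto. f_equal. field. lra. }
  assert (Heu : exp (- lam) = u) by (rewrite Hlu, Ropp_involutive, exp_ln; auto).
  set (v := exp (- lam / 10)).
  assert (Hv0 : 0 < v) by apply exp_pos.
  assert (Hv10 : v ^ 10 = u). { unfold v. rewrite exp_pow, <- Heu. f_equal. simpl. field. }
  assert (H1 : v <= (1 - x) ^ t).
  { apply Rle_trans with (exp (-(2*x)) ^ t).
    - rewrite exp_pow. unfold v. apply exp_mono. lra.
    - apply pow_incr. split. apply Rlt_le, exp_pos. apply one_minus_exp; auto. }
  assert (Hq : 0 <= q <= exp (- s)). { split. unfold q; lra. pose proof (exp_ineq1_le (-s)). unfold q; lra. }
  assert (H2 : (q ^ 2) ^ dd <= u ^ 2).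
  { apply Rle_trans with ((exp (-s) ^ 2) ^ dd).
    - apply pow_incr. split. apply sqp'. apply pow_incr. lra.
    - rewrite exp_pow, exp_pow. replace (u ^ 2) with (exp (- lam) ^ 2) by (rewrite Heu; auto).
      rewrite exp_pow. apply exp_mono. simpl. nra. }
  assert (Hu300 : u <= 1/300) by (unfold u; lra).
  assert (H3 : v ^ 9 <= 1/120).
  { apply Rnot_lt_le. intros C.
    assert (C2 : (1/120) ^ 10 < (v ^ 9) ^ 10).
    { apply (pow_lt_mono (1/120) (v ^ 9) 9). lra. }
    assert (C3 : (v ^ 9) ^ 10 = u ^ 9) by (rewrite <- pow_mult, <- Hv10, <- pow_mult; auto).
    assert (C4 : u ^ 9 <= (1/300) ^ 9) by (apply pow_incr; lra).
    assert (C5 : (1/300) ^ 9 <= (1/120) ^ 10) by (simpl; lra).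
    lra. }
  assert (Huv : u = v * v ^ 9) by (rewrite <- Hv10; simpl; ring).
  assert (Hq1 : 1/10 <= q <= 1) by (unfold q; lra).
  assert (Hmain : (1 + q) * u <= q ^ 2 * v - u ^ 2).
  { assert (u ^ 2 <= u / 300) by (simpl; nra).
    assert (u <= v / 120) by (rewrite Huv; nra).
    assert ((1+q)*u <= (1+q)*(v/120)) by (apply Rmult_le_compat_l; lra).
    assert (Qq : (1+q)/120 + 1/36000 <= q^2) by (simpl; nra).
    assert (((1+q)/120 + 1/36000) * v <= q^2 * v) by (apply Rmult_le_compat_r; lra).
    lra. }
  assert (Hfin : (1 + q) * u <= q ^ 2 * (1 - x) ^ t - (q ^ 2) ^ dd).
  { assert (q ^ 2 * v <= q ^ 2 * (1 - x) ^ t) by (apply Rmult_le_compat_l; [apply sqp'|auto]). lra. }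
  assert (E : eps = Delta * u) by (unfold u; field; lra).
  rewrite E. apply Rmult_le_reg_r with (1 + q); [lra|].
  replace (Delta / (1 + q) * (q ^ 2 * (1 - x) ^ t - (q ^ 2) ^ dd) * (1 + q)) with (Delta * (q ^ 2 * (1 - x) ^ t - (q ^ 2) ^ dd)) by (field; lra).
  nra. Qed.

Section Params.
Variables (N L mu : R).
Hypothesis HN : 2 <= N.
Hypothesis HL : 0 < L.
Hypothesis Hmu : 0 < mu.
Hypothesis Hk : L / mu >= sqrt (3 / N) * (N / 2 + 1).

Definition X := Rpower N (1/4).
Definition Y := sqrt (L / mu).

Lemma X_pos : 0 < X.
Proof. unfold X, Rpower. apply exp_pos. Qed.
Lemma Y_pos : 0 < Y.
Proof. unfold Y. apply sqrt_lt_R0. apply Rdiv_lt_0_compat; lra. Qed.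
Lemma Y2 : Y ^ 2 = L / mu.
Proof. unfold Y. apply pow2_sqrt. apply Rlt_le, Rdiv_lt_0_compat; lra. Qed.

Lemma Xpow k : X ^ k = Rpower N (1/4 * INR k).
Proof. unfold X. rewrite <- Rpower_pow by (apply exp_pos). rewrite Rpower_mult. auto. Qed.
Lemma X4 : X ^ 4 = N.
Proof. rewrite Xpow. replace (1/4 * INR 4) with 1 by (simpl; field). apply Rpower_1. lra. Qed.
Lemma X3 : Rpower N (3/4) = X ^ 3.
Proof. rewrite Xpow. f_equal. simpl. field. Qed.
Lemma Xm : Rpower N (- (1/4)) = / X.
Proof. rewrite Rpower_Ropp. auto. Qed.
Lemma X2 : X ^ 2 = sqrt N.
Proof. rewrite Xpow, <- Rpower_sqrt by lra. f_equal. simpl. field. Qed.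

Lemma sig2 : sqrt (3 / N) ^ 2 = 3 / N.
Proof. apply pow2_sqrt. apply Rlt_le, Rdiv_lt_0_compat; lra. Qed.
Lemma nu2 : sqrt N ^ 2 = N.
Proof. apply pow2_sqrt. lra. Qed.

Lemma ParX1 : X ^ 2 <= 6/5 * Y ^ 2.
Proof. rewrite X2, Y2. set (sg := sqrt (3 / N)) in *. set (nu := sqrt N) in *.
  assert (Hs : 0 <= sg) by apply sqrt_pos. assert (Hn : 0 <= nu) by apply sqrt_pos.
  pose proof sig2 as S2. pose proof nu2 as N2. fold sg in S2. fold nu in N2.
  apply Rle_trans with (6/5 * (sg * (N/2+1))); [|lra].
  apply sq_le_inv. auto. apply Rmult_le_pos; [lra|]. apply Rmult_le_pos; lra.
  replace ((6/5 * (sg * (N/2+1))) ^ 2) with (36/25 * sg ^ 2 * (N/2+1)^2) by field.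
  rewrite S2, N2. apply Rmult_le_reg_r with N; [lra|].
  replace (36 / 25 * (3 / N) * (N / 2 + 1) ^ 2 * N) with (108/25 * (N/2+1)^2) by (field; lra).
  nra. Qed.

Lemma ParX2 : 9/10 * X <= Y.
Proof. pose proof ParX1. pose proof X_pos. pose proof Y_pos. apply sq_le_inv; try lra. nra. Qed.

Lemma ParSmooth a : 0 <= a -> a <= 4 * L / (25 * X ^ 2) ->
  mu ^ 2 + 8 * mu * a + 4 * a ^ 2 * N ^ 2 / (N - 1) <= L ^ 2.
Proof. intros Ha0 Ha. rewrite X2 in Ha.
  set (sg := sqrt (3 / N)) in *. set (nu := sqrt N) in *.
  assert (Hs : 0 <= sg) by apply sqrt_pos. assert (Hn : 0 < nu) by (apply sqrt_lt_R0; lra).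
  pose proof sig2 as S2. pose proof nu2 as N2. fold sg in S2. fold nu in N2.
  set (U := sg * (N/2+1)).
  assert (HU : mu * U <= L).
  { unfold U. apply Rmult_le_reg_r with (/ mu). apply Rinv_0_lt_compat; lra.
    rewrite Rmult_comm, <- Rmult_assoc, Rinv_l, Rmult_1_l by lra. fold (L / mu). lra. }
  assert (HU2 : 6 <= U ^ 2).
  { unfold U. replace ((sg * (N / 2 + 1)) ^ 2) with (sg^2 * (N/2+1)^2) by ring. rewrite S2.
    apply Rmult_le_reg_r with N; [lra|]. replace (3 / N * (N / 2 + 1) ^ 2 * N) with (3 * (N/2+1)^2) by (field; lra). nra. }
  assert (HU0 : 0 <= U) by (unfold U; apply Rmult_le_pos; lra).
  assert (T1 : 6 * mu ^ 2 <= L ^ 2).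
  { assert (mu ^ 2 * U ^ 2 <= L ^ 2). { rewrite <- Rpow_mult_distr. apply pow_incr. split; [nra|auto]. }
    assert (0 <= mu ^ 2) by apply sqp'. nra. }
  assert (Hsn : 17/10 <= sg * nu).
  { apply sq_le_inv; try lra. apply Rmult_le_pos; lra. rewrite Rpow_mult_distr, S2, N2. field_simplify; lra. }
  assert (Ha' : a * (25 * nu) <= 4 * L).
  { apply Rmult_le_reg_r with (/ (25 * nu)). apply Rinv_0_lt_compat; lra.
    rewrite Rmult_assoc, Rinv_r by lra. unfold Rdiv in Ha. lra. }
  assert (T2 : mu * a * 85 <= 4 * L ^ 2).
  { assert (E1 : (mu * U) * (a * (25 * nu)) <= L * (4 * L)).
    { apply Rmult_le_compat; try lra. apply Rmult_le_pos; lra. apply Rmult_le_pos; lra. }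
    assert (E2 : U * nu >= 34/10). { unfold U. replace (sg * (N / 2 + 1) * nu) with ((sg * nu) * (N/2+1)) by ring. nra. }
    assert (0 <= mu * a) by (apply Rmult_le_pos; lra).
    assert (E3 : mu * a * 85 <= mu * a * (25 * (U * nu))) by (apply Rmult_le_compat_l; lra).
    replace (mu * a * (25 * (U * nu))) with ((mu * U) * (a * (25 * nu))) in E3 by ring. lra. }
  assert (T3 : a ^ 2 * N <= 16 * L ^ 2 / 625).
  { assert ((a * (25 * nu)) ^ 2 <= (4 * L) ^ 2) by (apply pow_incr; split; [apply Rmult_le_pos; lra|auto]).
    replace ((a * (25 * nu)) ^ 2) with (625 * a ^ 2 * nu ^ 2) in H by ring. rewrite N2 in H. lra. }
  assert (T4 : 4 * a ^ 2 * N ^ 2 / (N - 1) <= 128 * L ^ 2 / 625).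
  { replace (4 * a ^ 2 * N ^ 2 / (N - 1)) with (4 * (a ^ 2 * N) * (N / (N - 1))) by (field; lra).
    assert (N / (N - 1) <= 2). { apply Rmult_le_reg_r with (N - 1); [lra|]. field_simplify; lra. }
    assert (0 <= N / (N - 1)) by (apply Rlt_le, Rdiv_lt_0_compat; lra).
    assert (0 <= a ^ 2 * N) by (apply Rmult_le_pos; [apply sqp'|lra]).
    assert (a ^ 2 * N * (N / (N - 1)) <= 16 * L ^ 2 / 625 * 2).
    { apply Rmult_le_compat; auto. }
    lra. }
  assert (0 <= L ^ 2) by apply sqp'. lra. Qed.
End Params.

Lemma even_S m : Nat.even (S m) = negb (Nat.even m).
Proof. rewrite Nat.even_succ, <- Nat.negb_even. auto. Qed.

Lemma pow_le_one r n : 0 <= r <= 1 -> r ^ n <= 1.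
Proof. intros H. induction n; simpl; [lra|]. assert (0 <= r ^ n) by (apply pow_le; lra). nra. Qed.

Section Spec.
Variables (d k : nat) (N mu a s beta : R).
Hypothesis Hdk : d = (2 * k)%nat.
Hypothesis Hk1 : (1 <= k)%nat.
Hypothesis HN : 2 <= N.
Hypothesis Hmu : 0 < mu.
Hypothesis Ha : 0 < a.
Hypothesis Hs : 0 < s <= 1.

Definition bvec (m : nat) : R := if Nat.eqb m 0 then beta else 0.
Definition pj := mkQ (fun _ => mu)
  (fun m => if Nat.even m then (if Nat.ltb (S m) d then a * N else 0) else 0) bvec.
Definition pr := mkQ (fun m => mu + (if Nat.eqb m (pred d) then a * s * N / (N - 1) else 0))
  (fun m => if Nat.even m then 0 else (if Nat.ltb (S m) d then a * N / (N - 1) else 0)) bvec.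
Definition pa := mkQ (fun m => mu + (if Nat.eqb m (pred d) then a * s else 0))
  (fun m => if Nat.ltb (S m) d then a else 0) bvec.

Ltac unf := unfold pj, pr, pa; cbn [al la bb].

Lemma HN1 : 0 < N - 1. Proof. lra. Qed.
Lemma aN_pos : 0 < a * N. Proof. apply Rmult_lt_0_compat; lra. Qed.
Lemma aN1_pos : 0 < a * N / (N - 1). Proof. apply Rdiv_lt_0_compat. apply aN_pos. lra. Qed.

Lemma bvec_supp K : (1 <= K)%nat -> supp K bvec.
Proof. intros HK m Hm. unfold bvec. destruct (Nat.eqb_spec m 0); [lia|auto]. Qed.

Lemma ltb_bnd m : (pred d <= m)%nat -> Nat.ltb (S m) d = false.
Proof. intros H. apply Nat.ltb_ge. lia. Qed.

Lemma pj_al m : 0 <= al pj m. Proof. simpl. lra. Qed.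
Lemma pj_la m : 0 <= la pj m.
Proof. pose proof aN_pos. simpl. destruct (Nat.even m); [destruct (Nat.ltb (S m) d)|]; lra. Qed.
Lemma pj_bnd : bnd d (la pj).
Proof. intros m Hm. simpl. rewrite ltb_bnd by auto. destruct (Nat.even m); auto. Qed.
Lemma pj_no m : la pj m = 0 \/ la pj (S m) = 0.
Proof. unf. rewrite even_S. destruct (Nat.even m); simpl; auto. Qed.

Lemma pr_al m : 0 <= al pr m.
Proof. pose proof aN1_pos. simpl. destruct (Nat.eqb m (pred d)); [|lra].
  assert (0 <= a * s * N / (N - 1)). { unfold Rdiv. apply Rmult_le_pos. apply Rmult_le_pos. apply Rmult_le_pos; lra. lra.
    apply Rlt_le, Rinv_0_lt_compat; lra. } lra. Qed.
Lemma pr_la m : 0 <= la pr m.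
Proof. pose proof aN1_pos. simpl. destruct (Nat.even m); [|destruct (Nat.ltb (S m) d)]; lra. Qed.
Lemma pr_bnd : bnd d (la pr).
Proof. intros m Hm. simpl. rewrite ltb_bnd by auto. destruct (Nat.even m); auto. Qed.
Lemma pr_no m : la pr m = 0 \/ la pr (S m) = 0.
Proof. unf. rewrite even_S. destruct (Nat.even m); simpl; auto. Qed.

Lemma pr_lamL_odd k' : lamL (la pr) (S (2 * k')) = 0.
Proof. unf. cbn [lamL]. rewrite Nat.even_mul. simpl. auto. Qed.

Lemma pj_row m : (m < d)%nat -> (al pj m - mu) + la pj m + lamL (la pj) m <= a * N.
Proof. intros Hm. pose proof aN_pos. unf. destruct m as [|m']; cbn [lamL].
  - simpl. destruct (Nat.ltb 1 d); lra.
  - rewrite even_S. destruct (Nat.even m'); simpl; destruct (Nat.ltb (S (S m')) d); destruct (Nat.ltb (S m') d); lra. Qed.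

Lemma pr_row m : (m < d)%nat -> (al pr m - mu) + la pr m + lamL (la pr) m <= a * N / (N - 1).
Proof. intros Hm. pose proof aN1_pos.
  assert (Hth : a * s * N / (N - 1) <= a * N / (N - 1)).
  { unfold Rdiv. apply Rmult_le_compat_r. apply Rlt_le, Rinv_0_lt_compat; lra.
    assert (a * s <= a * 1) by (apply Rmult_le_compat_l; lra). nra. }
  assert (Hth0 : 0 <= a * s * N / (N - 1)).
  { unfold Rdiv. apply Rmult_le_pos. apply Rmult_le_pos. apply Rmult_le_pos; lra. lra. apply Rlt_le, Rinv_0_lt_compat; lra. }
  unf. destruct (Nat.eqb_spec m (pred d)) as [e|e].
  -
    rewrite (ltb_bnd m) by lia. subst m. rewrite Hdk.
    destruct k as [|k']; [lia|]. replace (pred (2 * S k')) with (S (2 * k')) by lia.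
    cbn [lamL]. assert (Hev : Nat.even (2 * k') = true) by (rewrite Nat.even_mul; reflexivity). rewrite Hev. destruct (Nat.even (S (2 * k'))); lra.
  - destruct m as [|m']; cbn [lamL].
    + simpl. destruct (Nat.ltb 1 d); lra.
    + rewrite even_S. destruct (Nat.even m'); simpl; destruct (Nat.ltb (S (S m')) d); destruct (Nat.ltb (S m') d); lra. Qed.

Lemma Qn_avg y : / N * (Qn d pj y + (N - 1) * Qn d pr y) = Qn d pa y.
Proof. unfold Qn. rewrite <- ss_scal, <- ss_plus, <- ss_scal. apply ss_ext. intros m _. simpl.
  destruct (Nat.even m); destruct (Nat.ltb (S m) d); destruct (Nat.eqb m (pred d)); field; lra. Qed.

Lemma pa_al m : (m < d)%nat -> mu <= al pa m.
Proof. intros. simpl. destruct (Nat.eqb m (pred d)); [|lra]. assert (0 <= a * s) by (apply Rmult_le_pos; lra). lra. Qed.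
Lemma pa_la m : 0 <= la pa m.
Proof. simpl. destruct (Nat.ltb (S m) d); lra. Qed.
Lemma pa_bnd : bnd d (la pa).
Proof. intros m Hm. simpl. rewrite ltb_bnd by auto. auto. Qed.

Variable gam : R.
Hypothesis Has : a * s ^ 2 = mu * (1 - s).
Hypothesis Hbeta : beta = gam * (mu + a * s).
Definition ystar (m : nat) : R := gam * (1 - s) ^ m.

Lemma ystar_grad m : (m < d)%nat -> Gn pa ystar m = 0.
Proof. intros Hm. unfold Gn, ystar. unf. unfold bvec.
  destruct m as [|m'].
  - rewrite (proj2 (Nat.eqb_neq 0 (pred d))) by lia. rewrite (proj2 (Nat.ltb_lt 1 d)) by lia.
    simpl. rewrite Hbeta. ring.
  - simpl lamL. simpl pred. rewrite (proj2 (Nat.ltb_lt (S m') d)) by lia.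
    destruct (Nat.eqb_spec (S m') 0); [lia|].
    rewrite !powS.
    destruct (Nat.eqb_spec (S m') (pred d)) as [e|e].
    + rewrite (ltb_bnd (S m')) by lia.
      replace ((mu + a * s) * (gam * ((1 - s) * (1 - s) ^ m')) + 0 * (gam * ((1 - s) * (1 - s) ^ m') - gam * ((1 - s) * ((1 - s) * (1 - s) ^ m'))) +
        a * (gam * ((1 - s) * (1 - s) ^ m') - gam * (1 - s) ^ m') - 0) with (gam * (1 - s) ^ m' * (mu * (1 - s) - a * s ^ 2)) by ring.
      rewrite Has. ring.
    + rewrite (proj2 (Nat.ltb_lt (S (S m')) d)) by lia.
      replace ((mu + 0) * (gam * ((1 - s) * (1 - s) ^ m')) + a * (gam * ((1 - s) * (1 - s) ^ m') - gam * ((1 - s) * ((1 - s) * (1 - s) ^ m'))) +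
        a * (gam * ((1 - s) * (1 - s) ^ m') - gam * (1 - s) ^ m') - 0) with (gam * (1 - s) ^ m' * (mu * (1 - s) - a * s ^ 2)) by ring.
      rewrite Has. ring. Qed.

Lemma Qn_at_star y : Qn d pa y = Qn d pa ystar + Rn d pa (fun m => y m - ystar m).
Proof. replace y with (fun m => ystar m + (y m - ystar m)) at 1 by (apply functional_extensionality; intro; ring).
  rewrite Q_expand by (apply pa_bnd). rewrite (ss_ext d _ (fun _ => 0)) by (intros m Hm; rewrite ystar_grad by auto; ring).
  rewrite ss_zero. ring. Qed.

Lemma Qn_zero : Qn d pa (fun _ => 0) = 0.
Proof. unfold Qn. transitivity (ss d (fun _ => 0)); [|apply ss_zero]. apply ss_ext; intros. cbv beta. unfold Rdiv. ring. Qed.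

Lemma gap_star : Qn d pa (fun _ => 0) - Qn d pa ystar = beta * gam / 2.
Proof. pose proof (Qn_at_star (fun _ => 0)) as E1.
  pose proof (Q_expand d pa (fun _ => 0) ystar pa_bnd) as E2.
  assert (E3 : (fun m => 0 + ystar m) = ystar) by (apply functional_extensionality; intro; ring).
  cbv beta in E2. rewrite E3 in E2.
  assert (E4 : ss d (fun m => Gn pa (fun _ => 0) m * ystar m) = - (beta * gam)).
  { rewrite (ss_ext d _ (fun m => (if Nat.eqb m 0 then 1 else 0) * (- beta * ystar m))).
    - rewrite ss_ind0 by lia. unfold ystar. simpl. ring.
    - intros m _. unfold Gn. simpl. unfold bvec. destruct (Nat.eqb m 0); destruct m; simpl; ring. }
  assert (E5 : Rn d pa (fun m => 0 - ystar m) = Rn d pa ystar).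
  { unfold Rn. apply ss_ext; intros; ring. }
  rewrite Qn_zero in E1, E2 |- *. rewrite E5 in E1. lra. Qed.

Lemma geom_tail r K D : 0 <= r <= 1 ->
  (r ^ K - r ^ D) <= ss D (fun m => if Nat.leb K m then r ^ m else 0) * (1 - r).
Proof. intros Hr. induction D; simpl.
  - assert (r ^ K <= 1) by (apply pow_le_one; lra). lra.
  - destruct (Nat.leb_spec K D).
    + lra.
    + assert (0 <= ss D (fun m => if Nat.leb K m then r ^ m else 0)).
      { apply ss_nonneg. intros m _. destruct (Nat.leb K m); [apply pow_le; lra|lra]. }
      assert (r ^ K <= r * r ^ D).
      { replace K with (S D + (K - S D))%nat by lia. rewrite pow_add. simpl.
        assert (r ^ (K - S D) <= 1) by (apply pow_le_one; lra). assert (0 <= r * r ^ D) by (apply Rmult_le_pos; [lra|apply pow_le; lra]). nra. }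
      nra. Qed.
End Spec.

Lemma ss_const n c : ss n (fun _ => c) = INR n * c.
Proof. induction n; simpl ss; [simpl; ring|]. rewrite IHn, S_INR. ring. Qed.

Lemma ss_lt d F G : (0 < d)%nat -> (forall m, (m < d)%nat -> F m < G m) -> ss d F < ss d G.
Proof. intros Hd H. destruct d; [lia|]. simpl. assert (ss d F <= ss d G) by (apply ss_le; intros; apply Rlt_le, H; lia).
  pose proof (H d ltac:(lia)). lra. Qed.

Lemma exists_small n p : (0 < n)%nat -> ss n p = 1 -> exists j, (j < n)%nat /\ p j <= / INR n.
Proof. intros Hn Hs. apply NNPP. intros C.
  assert (H : forall m, (m < n)%nat -> / INR n < p m).
  { intros m Hm. apply Rnot_le_lt. intros Hle. apply C. exists m. auto. }
  pose proof (ss_lt n _ _ Hn H). rewrite ss_const in H0. rewrite Rinv_r in H0. lra.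
  apply not_0_INR. lia. Qed.

Lemma ss_if_gen n j A B : ss n (fun i => if Nat.eqb i j then A else B) = INR n * B + (if Nat.ltb j n then A - B else 0).
Proof. induction n; simpl ss. simpl. ring. rewrite IHn, S_INR.
  destruct (Nat.eqb_spec n j); destruct (Nat.ltb_spec j n); destruct (Nat.ltb_spec j (S n)); try lia; ring. Qed.

Lemma ss_if n j A B : (j < n)%nat -> ss n (fun i => if Nat.eqb i j then A else B) = A + (INR n - 1) * B.
Proof. intros H. rewrite ss_if_gen. destruct (Nat.ltb_spec j n); [ring|lia]. Qed.

Lemma ss_pif n j (p : nat -> R) c : (j < n)%nat ->
  ss n (fun i => p i * (if Nat.eqb i j then c else 1)) = ss n p + p j * (c - 1).
Proof. revert j. induction n; intros j H; [lia|]. simpl ss.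
  destruct (Nat.eqb_spec n j).
  - subst j. rewrite (ss_ext n _ p). ring. intros m Hm. destruct (Nat.eqb_spec m n); [lia|ring].
  - rewrite IHn by lia. ring. Qed.

Lemma prodf_one l : prodf (fun _ => 1) l = 1.
Proof. induction l; simpl; auto. rewrite IHl. ring. Qed.

Theorem theorem3p3 :
  exists c C : R, 0 < c /\ 0 < C /\
  forall (n : nat) (L mu Delta eps : R),
    (2 <= n)%nat -> 0 < L -> 0 < mu -> 0 < Delta -> 0 < eps ->
    L / mu >= sqrt (3 / INR n) * (INR n / 2 + 1) ->
    eps / Delta <= 327 / 100000 ->
    forall A : PIFO n,
    exists (d : nat) (fs : nat -> vec d -> R) (gs : nat -> vec d -> vec d)
           (px : nat -> R -> vec d -> vec d),
      INR d <= C * Rpower (INR n) (- (1 / 4)) * sqrt (L / mu) * ln (Delta / eps) /\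
      (forall i, (i < n)%nat -> has_gradient (fs i) (gs i)) /\
      (forall i, (i < n)%nat -> forall (t : nat) (x : vec d), (1 <= t)%nat ->
          is_prox_unique (fs i) (gam A d t) x (px i (gam A d t) x)) /\
      average_smooth n gs L /\
      strongly_convex (avg_fun n fs) mu /\
      exists xs : vec d,
        is_minimizer (avg_fun n fs) xs /\
        avg_fun n fs (init A d) - avg_fun n fs xs = Delta /\
        forall t : nat,
          INR t <= c * (INR n + Rpower (INR n) (3 / 4) * sqrt (L / mu)) * ln (Delta / eps) ->
          expect n (prob A) t (fun l => avg_fun n fs (iterate A d fs gs px l))
            - avg_fun n fs xs >= eps.
Proof.
  exists (1/500), 10. split; [lra|]. split; [lra|].
  intros n L mu Delta eps Hn HL Hmu HD He Hk Hu A.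
  set (N := INR n) in *.
  assert (HN : 2 <= N) by (unfold N; replace 2 with (INR 2) by (simpl; ring); apply le_INR; auto).
  set (p := prob A).
  assert (Hp0 : forall j, (j < n)%nat -> 0 <= p j) by (intros; apply prob_nonneg; auto).
  assert (Hp1 : ss n p = 1) by (rewrite <- sum_lt_ss; apply prob_sum).
  destruct (exists_small n p ltac:(lia) Hp1) as [j [Hj Hpj]]. fold N in Hpj.
  set (Xv := X N). set (Yv := Y L mu).
  assert (HX : 0 < Xv) by apply X_pos. assert (HY : 0 < Yv) by (apply Y_pos; auto).
  assert (HX1 : Xv ^ 2 <= 6/5 * Yv ^ 2) by (apply ParX1; auto).
  assert (HX2 : 9/10 * Xv <= Yv) by (apply ParX2; auto).
  assert (HY2 : Yv ^ 2 = L / mu) by (apply Y2; auto).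
  set (s := Rmin (5/2 * Xv / Yv) (9/10)).
  assert (Hs1 : s <= 9/10) by apply Rmin_r.
  assert (Hs2 : s <= 5/2 * Xv / Yv) by apply Rmin_l.
  assert (Hs0 : 0 < s).
  { unfold s. apply Rmin_glb_lt; [|lra]. apply Rdiv_lt_0_compat; lra. }
  set (a := mu * (1 - s) / s ^ 2).
  assert (Hs2pos : 0 < s ^ 2) by (apply pow_lt; auto).
  assert (Has : a * s ^ 2 = mu * (1 - s)) by (unfold a; field; lra).
  assert (Ha : 0 < a) by (unfold a; apply Rdiv_lt_0_compat; auto; apply Rmult_lt_0_compat; lra).
  assert (Hale : a <= 4 * L / (25 * Xv ^ 2)).
  { assert (HLm : L = mu * Yv ^ 2) by (rewrite HY2; field; lra).
    assert (HX2p : 0 < Xv ^ 2) by (apply pow_lt; auto).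
    destruct (Rle_dec (5/2 * Xv / Yv) (9/10)) as [Hm1|Hm1];
    [assert (Hm2 : s = 5/2 * Xv / Yv) by (unfold s, Rmin; destruct (Rle_dec (5/2 * Xv / Yv) (9/10)); tauto)
    |assert (Hm2 : s = 9/10) by (unfold s, Rmin; destruct (Rle_dec (5/2 * Xv / Yv) (9/10)); tauto)];
    unfold a; rewrite Hm2.
    - rewrite HLm. apply Rmult_le_reg_r with (25 * Xv ^ 2); [lra|].
      replace (4 * (mu * Yv ^ 2) / (25 * Xv ^ 2) * (25 * Xv ^ 2)) with (4 * mu * Yv ^ 2) by (field; lra).
      replace (mu * (1 - 5 / 2 * Xv / Yv) / (5 / 2 * Xv / Yv) ^ 2 * (25 * Xv ^ 2)) with (4 * mu * Yv ^ 2 * (1 - 5 / 2 * Xv / Yv)) by (field; lra).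
      assert (0 < 4 * mu * Yv ^ 2) by (apply Rmult_lt_0_compat; [lra|apply pow_lt; lra]). nra.
    - rewrite HLm. apply Rmult_le_reg_r with (25 * Xv ^ 2); [lra|].
      replace (4 * (mu * Yv ^ 2) / (25 * Xv ^ 2) * (25 * Xv ^ 2)) with (4 * mu * Yv ^ 2) by (field; lra).
      replace (mu * (1 - 9 / 10) / (9 / 10) ^ 2 * (25 * Xv ^ 2)) with (mu * (250 / 81) * Xv ^ 2) by field.
      nra. }
  set (lam := ln (Delta / eps)).
  assert (Hlam1 : 1 <= lam).
  { unfold lam. rewrite <- (ln_exp 1). destruct (Rle_lt_or_eq_dec (exp 1) (Delta / eps)) as [h|h].
    - pose proof exp_le_3. assert (300 <= Delta / eps).
      { apply Rmult_le_reg_r with (eps / Delta). apply Rdiv_lt_0_compat; auto.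
        replace (Delta / eps * (eps / Delta)) with 1 by (field; lra). lra. }
      lra.
    - apply Rlt_le, ln_increasing; auto. apply exp_pos.
    - rewrite h. lra. }
  destruct (nat_ceil (lam / (2 * s))) as [k0 Hk0].
  { apply Rlt_le, Rdiv_lt_0_compat; lra. }
  set (k := S k0). set (d := (2 * k)%nat).
  assert (Hdk : d = (2 * k)%nat) by reflexivity.
  assert (Hk1 : (1 <= k)%nat) by (unfold k; lia).
  assert (Hd0 : (0 < d)%nat) by (unfold d; lia).
  assert (HINRd : INR d = 2 * (INR k0 + 1)). { unfold d, k. rewrite mult_INR, !S_INR. simpl. ring. }
  set (gam := sqrt (2 * Delta / (mu + a * s))).
  assert (Hmas : 0 < mu + a * s) by (assert (0 < a * s) by (apply Rmult_lt_0_compat; lra); lra).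
  assert (Hgam2 : gam ^ 2 = 2 * Delta / (mu + a * s)).
  { unfold gam. apply pow2_sqrt. apply Rlt_le, Rdiv_lt_0_compat; lra. }
  set (beta := gam * (mu + a * s)).
  assert (Hbeta : beta = gam * (mu + a * s)) by reflexivity.
  set (x0 := init A d).
  set (spec := fun i => if Nat.eqb i j then pj d N mu a beta else pr d N mu a s beta).
  assert (Hs1' : 0 < s <= 1) by lra.
  assert (Hspec_bnd : forall i, bnd d (la (spec i))).
  { intros i. unfold spec. destruct (Nat.eqb i j). apply (pj_bnd d k); auto. apply (pr_bnd d k); auto. }
  assert (Hspec_al : forall i m, 0 <= al (spec i) m).
  { intros i m. unfold spec. destruct (Nat.eqb i j). apply pj_al; lra. apply pr_al; auto. }
  assert (Hspec_la : forall i m, 0 <= la (spec i) m).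
  { intros i m. unfold spec. destruct (Nat.eqb i j). apply pj_la; auto. apply pr_la; auto. }
  assert (Hspec_no : forall i m, la (spec i) m = 0 \/ la (spec i) (S m) = 0).
  { intros i m. unfold spec. destruct (Nat.eqb i j). apply pj_no. apply pr_no. }
  assert (Hspec_bb : forall i K, (1 <= K)%nat -> supp K (bb (spec i))).
  { intros i K HK. unfold spec. destruct (Nat.eqb i j); simpl; apply (bvec_supp d k beta Hdk Hk1); auto. }
  exists d, (fun i => fQ x0 (spec i)), (fun i => gQ x0 (spec i)), (fun i g => pQ x0 (spec i) g).
  split.
  {
    rewrite (Xm N). fold Xv. change (sqrt (L / mu)) with Yv.
    assert (Hinv : / s <= 2/5 * (Yv / Xv) + 10/9).
    { destruct (Rle_dec (5/2 * Xv / Yv) (9/10)) as [Hm1|Hm1];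
      [assert (Hm2 : s = 5/2 * Xv / Yv) by (unfold s, Rmin; destruct (Rle_dec (5/2 * Xv / Yv) (9/10)); tauto)
      |assert (Hm2 : s = 9/10) by (unfold s, Rmin; destruct (Rle_dec (5/2 * Xv / Yv) (9/10)); tauto)];
      rewrite Hm2.
      - replace (/ (5 / 2 * Xv / Yv)) with (2/5 * (Yv / Xv)) by (field; lra). lra.
      - assert (0 <= Yv / Xv) by (apply Rlt_le, Rdiv_lt_0_compat; lra). lra. }
    set (Rr := Yv / Xv) in *.
    assert (HR : 9/10 <= Rr). { unfold Rr. apply Rmult_le_reg_r with Xv; auto. replace (Yv / Xv * Xv) with Yv by (field; lra). lra. }
    assert (Hls : lam / s <= lam * (2/5 * Rr + 10/9)). { unfold Rdiv. apply Rmult_le_compat_l; lra. }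
    assert (Hk0' : INR k0 <= lam / (2 * s) + 1) by lra.
    assert (E2 : lam / (2 * s) = / 2 * (lam / s)) by (field; lra).
    replace (10 * / Xv * Yv * lam) with (10 * Rr * lam) by (unfold Rr; field; lra).
    rewrite HINRd. nra. }
  split.
  { intros i _. apply fQ_grad; auto. }
  split.
  { intros i _ t x _. apply pQ_prox; auto. apply gam_pos. }
  assert (HaN : 0 < a * N) by (apply Rmult_lt_0_compat; lra).
  assert (HaN1 : 0 < a * N / (N - 1)) by (apply Rdiv_lt_0_compat; lra).
  assert (Hth0 : 0 <= a * s * N / (N - 1)).
  { unfold Rdiv. apply Rmult_le_pos. apply Rmult_le_pos. apply Rmult_le_pos; lra. lra. apply Rlt_le, Rinv_0_lt_compat; lra. }
  split.
  {
    intros x y. rewrite sum_lt_ss. fold N.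
    set (S0 := sqnorm (vsub x y)).
    assert (HS0 : 0 <= S0) by apply sqnorm_nonneg.
    set (cj := (mu + 2 * (a * N)) ^ 2). set (cr := (mu + 2 * (a * N / (N - 1))) ^ 2).
    apply Rle_trans with (/ N * ss n (fun i => if Nat.eqb i j then cj * S0 else cr * S0)).
    { apply Rmult_le_compat_l. apply Rlt_le, Rinv_0_lt_compat; lra.
      apply ss_le. intros i _. unfold spec. destruct (Nat.eqb i j).
      - apply gQ_smooth; try lra. apply (pj_bnd d k); auto.
        + intros m _. unfold pj. cbn [al]. lra.
        + apply pj_la; auto.
        + apply pj_row; auto.
      - apply gQ_smooth; try lra. apply (pr_bnd d k); auto.
        + intros m _. unfold pr. cbn [al]. destruct (Nat.eqb m (pred d)); lra.
        + apply pr_la; auto.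
        + apply (pr_row d k); auto. }
    rewrite ss_if by auto. fold N.
    replace (/ N * (cj * S0 + (N - 1) * (cr * S0))) with ((mu ^ 2 + 8 * mu * a + 4 * a ^ 2 * N ^ 2 / (N - 1)) * S0)
      by (unfold cj, cr; field; lra).
    apply Rmult_le_compat_r; auto. apply ParSmooth; auto. lra. }
  assert (Havg : avg_fun n (fun i => fQ x0 (spec i)) = fQ x0 (pa d mu a s beta)).
  { apply functional_extensionality; intro x. unfold avg_fun. rewrite sum_lt_ss. fold N.
    rewrite (ss_ext n _ (fun i => if Nat.eqb i j then fQ x0 (pj d N mu a beta) x else fQ x0 (pr d N mu a s beta) x))
      by (intros i _; unfold spec; destruct (Nat.eqb i j); auto).
    rewrite ss_if by auto. fold N. unfold fQ. apply Qn_avg; auto. }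
  assert (Hpa_bnd : bnd d (la (pa d mu a s beta))) by (apply (pa_bnd d k); auto).
  assert (Hpa_al : forall m, 0 <= al (pa d mu a s beta) m).
  { intros m. unfold pa. cbn [al]. destruct (Nat.eqb m (pred d)); [|lra].
    assert (0 <= a * s) by (apply Rmult_le_pos; lra). lra. }
  assert (Hpa_la : forall m, 0 <= la (pa d mu a s beta) m) by (intros; apply pa_la; auto).
  rewrite Havg.
  split.
  { exists (gQ x0 (pa d mu a s beta)). split.
    - apply fQ_grad; auto.
    - intros x y. apply fQ_sc; auto. intros m Hm. apply pa_al; auto. }
  set (ys := ystar s gam).
  set (xs := vadd x0 (HH x0 (mkv d ys))).
  assert (Hyxs : forall m, (m < d)%nat -> yof x0 xs m = ys m).
  { intros m Hm. unfold yof, xs.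
    replace (vsub (vadd x0 (HH x0 (mkv d ys))) x0) with (HH x0 (mkv d ys))
      by (apply functional_extensionality; intro; unfold vsub, vadd; ring).
    rewrite HH_inv, fget_mkv; auto. }
  assert (Hfxs : fQ x0 (pa d mu a s beta) xs = Qn d (pa d mu a s beta) ys).
  { unfold fQ. apply Qn_restr; auto. }
  assert (Hlow : forall x, fQ x0 (pa d mu a s beta) x =
      Qn d (pa d mu a s beta) ys + Rn d (pa d mu a s beta) (fun m => yof x0 x m - ys m)).
  { intros x. unfold fQ. apply (Qn_at_star d k); auto. }
  exists xs. split.
  { intros x. rewrite Hfxs, Hlow. pose proof (Rn_nonneg d (pa d mu a s beta) (fun m => yof x0 x m - ys m) Hpa_al Hpa_la). lra. }
  split.
  { rewrite Hfxs. unfold fQ.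
    assert (E0 : yof x0 x0 = fun _ => 0).
    { apply functional_extensionality; intro m. unfold yof.
      replace (vsub x0 x0) with (@vzero d) by (apply functional_extensionality; intro; unfold vsub, vzero; ring).
      rewrite HH_zero, fget_vzero. auto. }
    fold x0. rewrite E0. pose proof (gap_star d k mu a s beta Hdk Hk1 gam Has Hbeta) as G. fold ys in G. rewrite G.
    unfold beta. replace (gam * (mu + a * s) * gam / 2) with (gam ^ 2 * (mu + a * s) / 2) by field.
    rewrite Hgam2. field. lra. }
  intros t Ht.
  set (fs := fun i => fQ x0 (spec i)). set (gs := fun i => gQ x0 (spec i)). set (px := fun i g => pQ x0 (spec i) g).
  set (q := 1 - s). set (r := q ^ 2).
  set (adv := fun i => if Nat.eqb i j then 2%nat else 0%nat).
  set (phi := fun i => if Nat.eqb i j then q ^ 4 else 1).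
  set (fstar := fQ x0 (pa d mu a s beta) xs).
  set (LBc := Delta / (1 + q)).
  assert (Hq : 1/10 <= q < 1) by (unfold q; lra).
  set (Cnd := fun K => exists k', K = S (2 * k')).
  assert (Hinv : forall l, SK x0 (1 + sadv adv l) (iterate A d fs gs px l)).
  { intros l. apply (iterate_SK A d fs gs px (SK x0) Cnd adv).
    - intros; apply SK_add; auto.
    - intros; apply SK_scale; auto.
    - intros; apply SK_zero.
    - intros; eapply SK_mono; eauto.
    - intros K [k' ->]. apply SK_x0; auto. lia.
    - intros K i [k' ->]. unfold adv. destruct (Nat.eqb i j).
      + exists (S k'). lia.
      + exists k'. lia.
    - intros K i x [k' ->] HS. unfold adv, gs, spec. destruct (Nat.eqb i j).
      + apply (SK_mono x0 (S (S (2 * k')))). lia. apply gQ_SK; auto. lia.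
        cbn [pj bb]. apply (bvec_supp d k beta Hdk Hk1). lia.
      + rewrite Nat.add_0_r. apply gQ_SK0; auto. lia. cbn [pr bb]. apply (bvec_supp d k beta Hdk Hk1). lia.
        apply pr_lamL_odd.
    - intros K i g x [k' ->] HS. unfold adv, px, spec. destruct (Nat.eqb i j).
      + apply (SK_mono x0 (S (S (2 * k')))). lia. apply pQ_SK; auto. lia.
        cbn [pj bb]. apply (bvec_supp d k beta Hdk Hk1). lia.
      + rewrite Nat.add_0_r. apply pQ_SK0; auto. lia. cbn [pr bb]. apply (bvec_supp d k beta Hdk Hk1). lia.
        apply pr_lamL_odd.
    - exists 0%nat. lia. }
  assert (Hr : 0 <= r <= 1) by (unfold r; split; [apply pow2_ge_0|]; nra).
  assert (Hr1 : r < 1) by (unfold r; nra).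
  assert (Hcoef : mu / 2 * gam ^ 2 / (1 - r) = LBc).
  { rewrite Hgam2. unfold LBc, r, q, a. field. repeat split; try lra. assert (0 < 1 - (1 - s) ^ 2) by nra. lra. }
  assert (Hrpow : forall l, r ^ (1 + sadv adv l) = q ^ 2 * prodf phi l).
  { intros l. simpl. f_equal. induction l as [|i l IH]; simpl; [ring|].
    rewrite pow_add, IH. unfold adv, phi, r. destruct (Nat.eqb i j); simpl; ring. }
  assert (Hpath : forall l, fstar + LBc * (q ^ 2 * prodf phi l - r ^ d) <= fQ x0 (pa d mu a s beta) (iterate A d fs gs px l)).
  { intros l. set (z := iterate A d fs gs px l). set (K := (1 + sadv adv l)%nat).
    assert (Hsz : supp K (yof x0 z)) by (apply yof_supp; [auto|unfold K; lia|apply Hinv]).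
    unfold fstar. rewrite Hfxs, (Hlow z).
    pose proof (Rn_lower d (pa d mu a s beta) (fun m => yof x0 z m - ys m) mu ltac:(intros; apply pa_al; auto) Hpa_la) as R1.
    assert (R2 : gam ^ 2 * ss d (fun m => if Nat.leb K m then r ^ m else 0) <= ss d (fun m => (yof x0 z m - ys m) ^ 2)).
    { rewrite <- ss_scal. apply ss_le. intros m _. destruct (Nat.leb_spec K m).
      - rewrite (Hsz m) by auto. unfold ys, ystar, r. fold q. rewrite <- pow_mult, Nat.mul_comm, pow_mult. apply Req_le. ring.
      - rewrite Rmult_0_r. apply pow2_ge_0. }
    pose proof (geom_tail d k Hdk Hk1 r K d Hr) as R3.
    assert (R4 : (r ^ K - r ^ d) / (1 - r) <= ss d (fun m => if Nat.leb K m then r ^ m else 0)).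
    { apply Rmult_le_reg_r with (1 - r); [lra|]. replace ((r ^ K - r ^ d) / (1 - r) * (1 - r)) with (r ^ K - r ^ d) by (field; lra). lra. }
    assert (Hg2 : 0 <= gam ^ 2) by apply pow2_ge_0.
    assert (R5 : LBc * (r ^ K - r ^ d) <= Rn d (pa d mu a s beta) (fun m => yof x0 z m - ys m)).
    { rewrite <- Hcoef. replace (mu / 2 * gam ^ 2 / (1 - r) * (r ^ K - r ^ d)) with (mu / 2 * (gam ^ 2 * ((r ^ K - r ^ d) / (1 - r)))) by (field; lra).
      apply Rle_trans with (mu / 2 * ss d (fun m => (yof x0 z m - ys m) ^ 2)); auto.
      apply Rmult_le_compat_l; [lra|]. apply Rle_trans with (gam ^ 2 * ss d (fun m => if Nat.leb K m then r ^ m else 0)); auto.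
      apply Rmult_le_compat_l; auto. }
    unfold K in R5. rewrite Hrpow in R5. lra. }
  set (B := ss n (fun i => p i * phi i)).
  assert (HB : B = 1 - p j * (1 - q ^ 4)).
  { unfold B, phi. rewrite ss_pif by auto. rewrite Hp1. ring. }
  assert (Hone : expect n p t (fun _ => 1) = 1).
  { replace (fun _ : list nat => 1) with (prodf (fun _ => 1)) by (apply functional_extensionality; intro; apply prodf_one).
    rewrite expect_mult. rewrite (ss_ext n _ p) by (intros; ring). rewrite Hp1. apply pow1. }
  assert (HE : expect n p t (fun l => (LBc * q ^ 2) * prodf phi l + (fstar - LBc * r ^ d) * 1)
               <= expect n p t (fun l => fQ x0 (pa d mu a s beta) (iterate A d fs gs px l))).
  { apply expect_le; auto. intros l _. pose proof (Hpath l). cbv beta. lra. }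
  rewrite (expect_lin n p t (LBc * q ^ 2) (prodf phi) (fstar - LBc * r ^ d) (fun _ => 1)) in HE.
  rewrite expect_mult, Hone in HE. fold B in HE. rewrite HB in HE.
  set (x := p j * (1 - q ^ 4)) in *.
  assert (Hq4 : 0 <= q ^ 4 <= 1) by (split; [apply pow_le; lra|apply pow_le_one; lra]).
  assert (Hpj0 : 0 <= p j) by auto.
  assert (HinvN : / N <= 1/2) by (apply Rmult_le_reg_r with N; [lra|]; rewrite Rinv_l by lra; lra).
  assert (Hx : 0 <= x <= 1/2).
  { unfold x. split. apply Rmult_le_pos; lra.
    apply Rle_trans with (p j * 1). apply Rmult_le_compat_l; lra. lra. }
  assert (H4s : 1 - q ^ 4 <= 4 * s) by (unfold q; nra).
  assert (Hx2 : 2 * x <= 8 * s / N).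
  { unfold x. apply Rle_trans with (2 * (/ N * (4 * s))).
    - apply Rmult_le_compat_l; [lra|]. apply Rmult_le_compat; lra.
    - unfold Rdiv. lra. }
  assert (Htx : INR t * (2 * x) <= lam / 10).
  { rewrite (X3 N) in Ht. fold Xv in Ht. change (sqrt (L / mu)) with Yv in Ht.
    assert (Ht0 : 0 <= INR t) by apply pos_INR.
    assert (HX4 : Xv ^ 4 = N) by (apply X4; lra).
    assert (HsY : s * Yv <= 5/2 * Xv).
    { apply Rmult_le_reg_r with (/ Yv). apply Rinv_0_lt_compat; lra.
      replace (s * Yv * / Yv) with s by (field; lra). replace (5/2 * Xv * / Yv) with (5/2 * Xv / Yv) by (unfold Rdiv; ring). lra. }
    apply Rle_trans with (INR t * (8 * s / N)). { apply Rmult_le_compat_l; lra. }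
    apply Rle_trans with (1 / 500 * (N + Xv ^ 3 * Yv) * lam * (8 * s / N)).
    { apply Rmult_le_compat_r; auto. apply Rlt_le, Rdiv_lt_0_compat; lra. }
    replace (1 / 500 * (N + Xv ^ 3 * Yv) * lam * (8 * s / N)) with (8 / 500 * lam * (s + (s * Yv) / Xv))
      by (rewrite <- HX4; field; lra).
    assert (s * Yv / Xv <= 5/2).
    { apply Rmult_le_reg_r with Xv; auto. replace (s * Yv / Xv * Xv) with (s * Yv) by (field; lra). lra. }
    nra. }
  assert (Hds : lam <= INR d * s).
  { rewrite HINRd. assert (lam / (2 * s) * (2 * s) = lam) by (field; lra). nra. }
  pose proof (final_num Delta eps s x t d lam HD He Hu eq_refl ltac:(lra) Hx Htx Hds) as F.
  fold q in F. fold r in F. fold LBc in F. unfold r in F, HE. set (W := (1 - x) ^ t) in *. set (Z := q ^ 2) in *. set (Zd := Z ^ d) in *. set (EE := expect n p t _) in *. assert (E1 : LBc * (Z * W - Zd) = LBc * Z * W - LBc * Zd) by ring. lra.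
Qed.
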